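(* If $z$ is a real number with $0<|z|\le 1/\alpha$, then \[ \sum_{k=1}^\infty\frac{F_{2k}\zeta(2k)z^{2k}}{k(2k+1)} = \frac{2\ln\alpha}{\sqrt5}-\frac{\beta\operatorname{Cl}_2(2\pi\alpha z)-\alpha\operatorname{Cl}_2(2\pi\beta z)}{2\sqrt5\,\pi z}, \] \[ \sum_{k=1}^\infty\frac{L_{2k}\zeta(2k)z^{2k}}{k(2k+1)} = -2+2\ln(2\pi z)-\frac{\beta\operatorname{Cl}_2(2\pi\alpha z)+\alpha\operatorname{Cl}_2(2\pi\beta z)}{2\pi z}. \]
   Context: $F_n$, $L_n$ are the Fibonacci and Lucas numbers ($F_0=0,F_1=1$, $L_0=2,L_1=1$, $w_n=w_{n-1}+w_{n-2}$); $\alpha=(1+\sqrt5)/2$, $\beta=(1-\sqrt5)/2$. $\zeta$ is the Riemann zeta function and $\operatorname{Cl}_2(x)=\sum_{k\ge1}\sin(kx)/k^2$ is the Clausen function. *)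

(* Defs.v *)
From Stdlib Require Import Reals.
From Coquelicot Require Import Coquelicot.
Open Scope R_scope.

Fixpoint fib (n : nat) : R :=
  match n with
  | O => 0
  | S O => 1
  | S ((S m) as p) => fib p + fib m
  end.

Fixpoint lucas (n : nat) : R :=
  match n with
  | O => 2
  | S O => 1
  | S ((S m) as p) => lucas p + lucas m
  end.

Definition alpha : R := (1 + sqrt 5) / 2.
Definition beta : R := (1 - sqrt 5) / 2.

Definition zeta (s : R) : R :=
  Series (fun n : nat => / Rpower (INR n + 1) s).

Definition Cl2 (x : R) : R :=
  Series (fun n : nat => sin (INR (S n) * x) / (INR (S n)) ^ 2).

(* Main.v *)
Require Import Defs.
From Stdlib Require Import Reals Lra Lia.
From Coquelicot Require Import Coquelicot.
Open Scope R_scope.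

Lemma sum_n_m_R_abs (a : nat -> R) n m :
  Rabs (sum_n_m a n m) <= sum_n_m (fun k => Rabs (a k)) n m.
Proof. apply (norm_sum_n_m a n m). Qed.

Lemma sum_n_diff (a : nat -> R) m n : (m <= n)%nat ->
  sum_n a n - sum_n a m = sum_n_m a (S m) n.
Proof. intros H. symmetry. apply (sum_n_m_sum_n a m n H). Qed.

Lemma mtest_cvu (u : nat -> R -> R) (M : nat -> R) (D : R -> Prop) :
  (forall n x, D x -> Rabs (u n x) <= M n) -> ex_series M ->
  CVU_dom (fun N x => sum_n (fun k => u k x) N) D.
Proof.
  intros Hb HM. apply CVU_dom_cauchy. intro eps.
  destruct (Cauchy_ex_series M HM eps) as [N HN].
  exists N. intros n m x Hx Hn Hm.
  assert (key : forall p q, (N <= p)%nat -> (p < q)%nat ->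
     Rabs (sum_n (fun k => u k x) q - sum_n (fun k => u k x) p) < eps).
  { intros p q Hp Hq. rewrite sum_n_diff by lia.
    eapply Rle_lt_trans. apply sum_n_m_R_abs.
    eapply Rle_lt_trans. apply sum_n_m_le. intros k. apply (Hb k x Hx).
    eapply Rle_lt_trans. apply Rle_abs.
    apply (HN (S p) q); lia. }
  destruct (Compare_dec.lt_eq_lt_dec m n) as [[Hlt|Heq]|Hlt].
  - apply key; lia.
  - subst. unfold Rminus. rewrite Rplus_opp_r, Rabs_R0. apply cond_pos.
  - rewrite Rabs_minus_sym. apply key; lia.
Qed.



Lemma cvu_bound (fn : nat -> R -> R) (f : R -> R) (D : R -> Prop) (e : nat -> R) :
  (forall n x, D x -> Rabs (fn n x - f x) <= e n) -> is_lim_seq e 0 ->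
  CVU_dom fn D /\ (forall x, D x -> is_lim_seq (fun n => fn n x) (f x)).
Proof.
  intros Hb He.
  assert (Hl : forall x, D x -> is_lim_seq (fun n => fn n x) (f x)).
  { intros x Hx. apply is_lim_seq_abs_0 in He.
    apply (is_lim_seq_le_le (fun n => f x - Rabs (e n)) _ (fun n => f x + Rabs (e n))).
    - intros n. specialize (Hb n x Hx). apply Rabs_le_between in Hb.
      pose proof (Rle_abs (e n)). split; lra.
    - replace (Finite (f x)) with (Rbar_minus (f x) 0) by (simpl; f_equal; ring).
      apply is_lim_seq_minus'. apply is_lim_seq_const. exact He.
    - replace (Finite (f x)) with (Rbar_plus (f x) 0) by (simpl; f_equal; ring).
      apply is_lim_seq_plus'. apply is_lim_seq_const. exact He. }
  split; [|exact Hl].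
  intros eps. apply is_lim_seq_spec in He. destruct (He eps) as [N HN].
  exists N. intros n Hn x Hx. rewrite (is_lim_seq_unique _ _ (Hl x Hx)). simpl.
  eapply Rle_lt_trans. apply Hb; auto. specialize (HN n Hn).
  rewrite Rminus_0_r in HN. eapply Rle_lt_trans. apply Rle_abs. exact HN.
Qed.

Lemma is_derive_cont (f : R -> R) x l : is_derive f x l -> continuity_pt f x.
Proof.
  intros H. apply continuity_pt_filterlim. apply (ex_derive_continuous f x).
  exists l. exact H.
Qed.

Lemma deriv_nonneg_le (h dh : R -> R) a b : a <= b ->
  (forall x, a <= x <= b -> is_derive h x (dh x)) ->
  (forall x, a <= x <= b -> 0 <= dh x) -> h a <= h b.
Proof.
  intros Hab Hd Hp.
  destruct (MVT_gen h a b dh) as [c [Hc Heq]].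
  - intros x Hx. rewrite Rmin_left, Rmax_right in Hx by lra. apply Hd; lra.
  - intros x Hx. rewrite Rmin_left, Rmax_right in Hx by lra.
    apply (is_derive_cont h x (dh x)). apply Hd; lra.
  - rewrite Rmin_left, Rmax_right in Hc by lra.
    assert (0 <= dh c * (b - a)) by (apply Rmult_le_pos; [apply Hp; lra| lra]).
    lra.
Qed.

Lemma deriv_bound (f df g dg : R -> R) a b : a <= b ->
  (forall x, a <= x <= b -> is_derive f x (df x)) ->
  (forall x, a <= x <= b -> is_derive g x (dg x)) ->
  (forall x, a <= x <= b -> Rabs (df x) <= dg x) ->
  Rabs (f b - f a) <= g b - g a.
Proof.
  intros Hab Hf Hg Hb.
  assert (H1 : g a - f a <= g b - f b).
  { apply (deriv_nonneg_le (fun x => g x - f x) (fun x => dg x - df x)); auto.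
    - intros x Hx. apply (is_derive_minus g f); auto.
    - intros x Hx. specialize (Hb x Hx). apply Rabs_le_between in Hb. lra. }
  assert (H2 : g a + f a <= g b + f b).
  { apply (deriv_nonneg_le (fun x => g x + f x) (fun x => dg x + df x)); auto.
    - intros x Hx. apply (is_derive_plus g f); auto.
    - intros x Hx. specialize (Hb x Hx). apply Rabs_le_between in Hb. lra. }
  simpl in *. apply Rabs_le_between. lra.
Qed.

Lemma deriv_bound_const (f df : R -> R) a b B : a <= b ->
  (forall x, a <= x <= b -> is_derive f x (df x)) ->
  (forall x, a <= x <= b -> Rabs (df x) <= B) ->
  Rabs (f b - f a) <= B * (b - a).
Proof.
  intros Hab Hf Hb.
  replace (B * (b - a)) with ((fun x => B * x) b - (fun x => B * x) a) by (simpl; ring).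
  apply (deriv_bound f df (fun x => B * x) (fun _ => B)); auto.
  intros x _. auto_derive; auto. ring.
Qed.

Lemma deriv_zero_const (f df : R -> R) l r :
  (forall x, l < x < r -> is_derive f x (df x)) ->
  (forall x, l < x < r -> df x = 0) ->
  forall x y, l < x < r -> l < y < r -> f x = f y.
Proof.
  intros Hd H0.
  assert (K : forall x y, l < x < r -> l < y < r -> x <= y -> f x = f y).
  { intros x y Hx Hy Hxy.
    pose proof (deriv_bound_const f df x y 0 Hxy) as Hb.
    assert (Rabs (f y - f x) <= 0 * (y - x)).
    { apply Hb. intros; apply Hd; lra. intros z Hz. rewrite H0 by lra. rewrite Rabs_R0; lra. }
    rewrite Rmult_0_l in H. pose proof (Rabs_pos (f y - f x)).
    assert (Rabs (f y - f x) = 0) by lra. apply Rabs_eq_0 in H2. lra. }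
  intros x y Hx Hy. destruct (Rle_dec x y). apply K; auto. symmetry; apply K; auto; lra.
Qed.

Lemma is_series_from_lim (a : nat -> R) (l : R) : is_lim_seq (sum_n a) l -> is_series a l.
Proof. intros H. exact H. Qed.

Lemma is_series_to_lim (a : nat -> R) (l : R) : is_series a l -> is_lim_seq (sum_n a) l.
Proof. intros H. exact H. Qed.

Lemma telescope_sum (f : nat -> R) N :
  sum_n (fun n => f n - f (S n)) N = f O - f (S N).
Proof.
  induction N. rewrite sum_O. reflexivity.
  rewrite sum_Sn, IHN. unfold plus; simpl. ring.
Qed.

Lemma is_series_telescope (f : nat -> R) (l : R) : is_lim_seq f l ->
  is_series (fun n => f n - f (S n)) (f O - l).
Proof.
  intros H. apply is_series_from_lim.
  apply is_lim_seq_ext with (fun N => f O - f (S N)).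
  intros; rewrite telescope_sum; reflexivity.
  replace (Finite (f O - l)) with (Rbar_minus (f O) l) by reflexivity.
  apply is_lim_seq_minus'. apply is_lim_seq_const.
  apply is_lim_seq_incr_1 in H. exact H.
Qed.

Lemma is_lim_seq_inv_n : is_lim_seq (fun n => / INR (S n)) 0.
Proof.
  apply is_lim_seq_incr_1 with (u := fun n => / INR n).
  replace (Finite 0) with (Rbar_inv p_infty) by reflexivity.
  apply is_lim_seq_inv. apply is_lim_seq_INR. discriminate.
Qed.

Lemma ex_series_inv_sq : ex_series (fun n => / INR (S n) ^ 2).
Proof.
  apply (@ex_series_le R_AbsRing R_CompleteNormedModule _ (fun n => 2 * (/ INR (S n) - / INR (S (S n))))).
  - intros n. rewrite (S_INR (S n)).
    assert (H: 1 <= INR (S n)) by (apply (le_INR 1); lia).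
    revert H. generalize (INR (S n)). intros t Ht.
    unfold norm; simpl. unfold abs; simpl.
    rewrite Rabs_pos_eq by (apply Rlt_le, Rinv_0_lt_compat; nra).
    apply Rmult_le_reg_r with (t * t * (t + 1)). 
    apply Rmult_lt_0_compat; nra.
    field_simplify; try lra. idtac.
  - apply (@ex_series_scal_l R_AbsRing R_NormedModule 2 (fun n => / INR (S n) - / INR (S (S n)))).
    eexists. apply is_series_telescope with (f := fun n => / INR (S n)).
    apply is_lim_seq_inv_n.
Qed.

Lemma sum_Sn_R (a : nat -> R) n : sum_n a (S n) = sum_n a n + a (S n).
Proof. exact (@sum_Sn R_AbelianMonoid a n). Qed.

Lemma abs_div_le u w w0 : Rabs u <= 1 -> 0 < w0 <= w -> Rabs (u / w) <= / w0.
Proof.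
  intros Hu Hw. unfold Rdiv. rewrite Rabs_mult, Rabs_inv, (Rabs_pos_eq w) by lra.
  rewrite <- (Rmult_1_l (/ w0)). apply Rmult_le_compat; try apply Rabs_pos.
  apply Rlt_le, Rinv_0_lt_compat; lra. exact Hu.
  apply Rinv_le_contravar; lra.
Qed.

Lemma abs_sin_le x : Rabs (sin x) <= 1.
Proof. apply Rabs_le. apply SIN_bound. Qed.
Lemma abs_cos_le x : Rabs (cos x) <= 1.
Proof. apply Rabs_le. apply COS_bound. Qed.

Lemma is_series_ext_R (a b : nat -> R) (l : R) :
  (forall n, a n = b n) -> is_series a l -> is_series b l.
Proof. intros H. apply is_series_ext. exact H. Qed.

Lemma lim_bound_inv (u : nat -> R) C :
  (forall N, Rabs (u N) <= C / INR (S N)) -> is_lim_seq u 0.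
Proof.
  intros H.
  assert (L : is_lim_seq (fun N => C * / INR (S N)) 0).
  { replace (Finite 0) with (Rbar_mult C 0) by (simpl; f_equal; ring).
    apply is_lim_seq_scal_l. apply is_lim_seq_inv_n. }
  apply (is_lim_seq_le_le (fun N => - (C * / INR (S N))) u (fun N => C * / INR (S N))).
  - intros N. specialize (H N). apply Rabs_le_between in H. unfold Rdiv in H. lra.
  - pose proof (proj1 (is_lim_seq_opp (fun N => C * / INR (S N)) (Finite 0)) L) as L'.
    simpl in L'. rewrite Ropp_0 in L'. exact L'.
  - exact L.
Qed.

Lemma lim_sum_n_R (a : nat -> R) l : is_series a l -> is_lim_seq (sum_n a) l.
Proof. intros H. exact H. Qed.

Lemma is_lim_seq_scal_l_R (u : nat -> R) (a l : R) :
  is_lim_seq u l -> is_lim_seq (fun n => a * u n) (a * l).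
Proof. intros H. exact (is_lim_seq_scal_l u a l H). Qed.

Lemma cos_SnPI m : cos (INR (S m) * PI) = (-1) ^ (S m).
Proof.
  induction m. simpl. rewrite Rmult_1_l, cos_PI. ring.
  rewrite S_INR, Rmult_plus_distr_r, Rmult_1_l, neg_cos, IHm. simpl. ring.
Qed.

Lemma geom_alt M t : (1 + t) * sum_n (fun m => (- t) ^ m) M = 1 - (- t) ^ (S M).
Proof.
  induction M. rewrite sum_O. simpl. ring.
  rewrite sum_Sn. unfold plus; simpl. rewrite Rmult_plus_distr_l, IHM. simpl. ring.
Qed.

Definition pM (M : nat) (t : R) :=
  sum_n (fun m => (- t) ^ (S m) / INR (S m)) M + ln (1 + t).

Lemma pM_derive M t : 0 <= t ->
  is_derive (pM M) t ((- t) ^ (S M) / (1 + t)).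
Proof.
  intros Ht. unfold pM.
  replace ((- t) ^ (S M) / (1 + t)) with
     (sum_n (fun m => - (- t) ^ m) M + / (1 + t)).
  2:{ assert (E : sum_n (fun m : nat => - (- t) ^ m) M = - sum_n (fun m => (- t) ^ m) M).
      { clear. induction M. rewrite !sum_O. reflexivity.
        rewrite !sum_Sn, IHM. unfold plus; simpl. ring. }
      rewrite E.
      assert (G : @eq R (sum_n (fun m => (-t)^m) M) ((1 - (-t)^(S M)) / (1+t)))
        by (rewrite <- geom_alt; unfold Rdiv; rewrite (Rmult_comm (1+t)), Rmult_assoc, Rinv_r, Rmult_1_r by lra; reflexivity).
      rewrite G. field. lra. }
  apply (is_derive_plus (fun y => sum_n (fun m => (- y) ^ (S m) / INR (S m)) M) (fun y => ln (1 + y))).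
  - apply (is_derive_sum_n (fun m y => (- y) ^ (S m) / INR (S m))).
    intros k _. auto_derive. exact I.
    change (match k with 0%nat => 1 | S _ => INR k + 1 end) with (INR (S k)).
    field. apply not_0_INR. lia.
  - auto_derive. lra. field. lra.
Qed.

Definition cN (M : nat) (x : R) := sum_n (fun m => cos (INR (S m) * x) / INR (S m)) M.

Lemma alt_harm M : Rabs (cN M PI + ln 2) <= / (INR M + 2).
Proof.
  assert (H1 : pM M 1 = cN M PI + ln 2).
  { unfold pM, cN. replace (1 + 1) with 2 by ring. f_equal.
    apply sum_n_ext. intros m. rewrite cos_SnPI. reflexivity. }
  assert (H0 : pM M 0 = 0).
  { unfold pM. rewrite Rplus_0_r, ln_1, Rplus_0_r.
    rewrite (sum_n_ext _ (fun _ => 0)). 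
    - clear. induction M. rewrite sum_O; reflexivity. rewrite sum_Sn, IHM. unfold plus; simpl; ring.
    - intros m. simpl. unfold Rdiv. ring. }
  rewrite <- H1.
  replace (pM M 1) with (pM M 1 - pM M 0) by (rewrite H0; ring).
  replace (/ (INR M + 2)) with ((fun t => t ^ (S (S M)) / INR (S (S M))) 1 - (fun t => t ^ (S (S M)) / INR (S (S M))) 0).
  2:{ cbv beta. rewrite pow1, pow_i by lia. rewrite !S_INR. field. pose proof (pos_INR M). lra. }
  apply (deriv_bound (pM M) (fun t => (- t) ^ (S M) / (1 + t)) (fun t => t ^ (S (S M)) / INR (S (S M))) (fun t => t ^ (S M)) 0 1).
  - lra.
  - intros x Hx. apply pM_derive. lra.
  - intros x Hx. auto_derive. exact I.
    change (match M with 0%nat => 1 | S _ => INR M + 1 end) with (INR (S M)).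
    simpl pow. field. pose proof (pos_INR (S M)). lra.
  - intros y Hy. unfold Rdiv. rewrite Rabs_mult, <- RPow_abs, Rabs_Ropp, Rabs_pos_eq by lra.
    rewrite Rabs_pos_eq by (apply Rlt_le, Rinv_0_lt_compat; lra).
    rewrite <- (Rmult_1_r (y ^ S M)) at 2. apply Rmult_le_compat_l.
    apply pow_le; lra. rewrite <- Rinv_1. apply Rinv_le_contravar; lra.
Qed.

Lemma prod_sin A B : 2 * sin A * sin B = cos (B - A) - cos (B + A).
Proof. rewrite cos_minus, cos_plus. ring. Qed.

Definition aM (M : nat) := (2 * INR M + 3) / 2.

Lemma sin_sum_closed M x :
  2 * sin (x / 2) * sum_n (fun m => sin (INR (S m) * x)) M = cos (x / 2) - cos (aM M * x).
Proof.
  unfold aM. induction M.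
  - rewrite sum_O. rewrite prod_sin. simpl. f_equal; f_equal; field.
  - rewrite sum_Sn_R. rewrite Rmult_plus_distr_l, IHM, prod_sin.
    rewrite !S_INR. replace (2 * (INR M + 1) + 3) with (2 * INR M + 5) by ring.
    replace ((INR M + 1 + 1) * x - x / 2) with ((2 * INR M + 3) / 2 * x) by field.
    replace ((INR M + 1 + 1) * x + x / 2) with ((2 * INR M + 5) / 2 * x) by field.
    ring.
Qed.

Lemma aM_pos M : INR (S M) <= aM M.
Proof. unfold aM. rewrite S_INR. pose proof (pos_INR M). lra. Qed.

Definition FM (M : nat) (x : R) :=
  cN M x + ln (2 * sin (x / 2)) - sin (aM M * x) / (2 * aM M * sin (x / 2)).

Lemma FM_derive M x : 0 < sin (x / 2) ->
  is_derive (FM M) x (sin (aM M * x) * cos (x / 2) / (4 * aM M * sin (x / 2) ^ 2)).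
Proof.
  intros Hs.
  assert (Ha : 0 < aM M) by (pose proof (aM_pos M); pose proof (lt_0_INR (S M) (Nat.lt_0_succ M)); lra).
  set (S0 := sum_n (fun m => sin (INR (S m) * x)) M).
  assert (HS : S0 = (cos (x / 2) - cos (aM M * x)) / (2 * sin (x / 2))).
  { pose proof (sin_sum_closed M x) as E. fold S0 in E.
    apply (Rmult_eq_reg_l (2 * sin (x / 2))); [|lra]. rewrite E. field. lra. }
  assert (D1 : is_derive (cN M) x (- S0)).
  { unfold cN, S0.
    replace (- sum_n (fun m => sin (INR (S m) * x)) M) with
      (sum_n (fun m => - sin (INR (S m) * x)) M).
    2:{ clear. induction M. rewrite !sum_O. reflexivity.
        rewrite !sum_Sn, IHM. unfold plus; simpl. ring. }
    apply (is_derive_sum_n (fun m y => cos (INR (S m) * y) / INR (S m))).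
    intros k _. auto_derive. exact I.
    change (match k with 0%nat => 1 | S _ => INR k + 1 end) with (INR (S k)).
    field. apply not_0_INR. lia. }
  assert (D2 : is_derive (fun y => ln (2 * sin (y / 2))) x (cos (x / 2) / (2 * sin (x / 2)))).
  { auto_derive; unfold Rdiv. lra. field. lra. }
  assert (D3 : is_derive (fun y => sin (aM M * y) / (2 * aM M * sin (y / 2))) x
     (cos (aM M * x) / (2 * sin (x / 2)) - sin (aM M * x) * cos (x / 2) / (4 * aM M * sin (x / 2) ^ 2))).
  { auto_derive; unfold Rdiv.
    apply Rgt_not_eq. apply Rmult_lt_0_compat; lra.
    field. lra. }
  pose proof (is_derive_minus _ _ _ _ _ (is_derive_plus _ _ _ _ _ D1 D2) D3) as D.
  unfold FM.
  replace (sin (aM M * x) * cos (x / 2) / (4 * aM M * sin (x / 2) ^ 2)) with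
    (minus (plus (- S0) (cos (x / 2) / (2 * sin (x / 2))))
       (cos (aM M * x) / (2 * sin (x / 2)) -
        sin (aM M * x) * cos (x / 2) / (4 * aM M * sin (x / 2) ^ 2))).
  - eapply is_derive_ext; [|exact D]. intros t. reflexivity.
  - unfold minus, plus, opp; simpl. rewrite HS. field. lra.
Qed.

Lemma sin_half_ge d x : 0 < d < PI -> d <= x <= 2 * PI - d -> sin (d / 2) <= sin (x / 2).
Proof.
  intros Hd Hx. destruct (Rle_dec (x / 2) (PI / 2)).
  - apply sin_incr_1; lra.
  - rewrite <- (sin_PI_x (x / 2)). apply sin_incr_1; lra.
Qed.

Definition Cd (d : R) := PI / (4 * sin (d / 2) ^ 2) + 1 + 1 / 2 + 1 / (2 * sin (d / 2)).

Lemma e_bound d M x : 0 < d < PI -> d <= x <= 2 * PI - d ->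
  Rabs (cN M x + ln (2 * sin (x / 2))) <= Cd d / INR (S M).
Proof.
  intros Hd Hx.
  assert (Hs0 : 0 < sin (d / 2)) by (apply sin_gt_0; lra).
  set (s0 := sin (d / 2)) in *.
  assert (Hsx : s0 <= sin (x / 2)) by (apply sin_half_ge; lra).
  pose proof (aM_pos M) as HaM. pose proof (lt_0_INR (S M) (Nat.lt_0_succ M)) as HSM.
  set (a := aM M) in *. set (n1 := INR (S M)) in *.
  assert (Hn1 : 1 <= n1) by (unfold n1; apply (le_INR 1); lia).
  set (B := / (4 * a * s0 ^ 2)).
  assert (HB : forall y, d <= y <= 2 * PI - d ->
     is_derive (FM M) y (sin (a * y) * cos (y / 2) / (4 * a * sin (y / 2) ^ 2))
     /\ Rabs (sin (a * y) * cos (y / 2) / (4 * a * sin (y / 2) ^ 2)) <= B).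
  { intros y Hy. assert (Hsy : s0 <= sin (y / 2)) by (apply sin_half_ge; lra).
    split. apply FM_derive. lra.
    apply abs_div_le. rewrite Rabs_mult. rewrite <- (Rmult_1_l 1).
    apply Rmult_le_compat; try apply Rabs_pos; [apply abs_sin_le|apply abs_cos_le].
    split. apply Rmult_lt_0_compat; [lra| apply pow_lt; lra].
    apply Rmult_le_compat_l. lra. apply pow_incr. lra. }
  assert (HF : Rabs (FM M x - FM M PI) <= B * PI).
  { destruct (Rle_dec x PI).
    - rewrite Rabs_minus_sym.
      apply Rle_trans with (B * (PI - x)).
      apply (deriv_bound_const (FM M) (fun y => sin (a * y) * cos (y / 2) / (4 * a * sin (y / 2) ^ 2))).
      lra. intros y Hy; apply HB; lra. intros y Hy; apply HB; lra.
      apply Rmult_le_compat_l. unfold B. apply Rlt_le, Rinv_0_lt_compat.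
      apply Rmult_lt_0_compat; [lra| apply pow_lt; lra]. lra.
    - apply Rle_trans with (B * (x - PI)).
      apply (deriv_bound_const (FM M) (fun y => sin (a * y) * cos (y / 2) / (4 * a * sin (y / 2) ^ 2))).
      lra. intros y Hy; apply HB; lra. intros y Hy; apply HB; lra.
      apply Rmult_le_compat_l. unfold B. apply Rlt_le, Rinv_0_lt_compat.
      apply Rmult_lt_0_compat; [lra| apply pow_lt; lra]. lra. }
  assert (HFPI : FM M PI = (cN M PI + ln 2) - sin (a * PI) / (2 * a)).
  { unfold FM. fold a. rewrite sin_PI2, !Rmult_1_r. reflexivity. }
  assert (HG : Rabs (sin (a * x) / (2 * a * sin (x / 2))) <= / (2 * a * s0)).
  { apply abs_div_le. apply abs_sin_le. split. apply Rmult_lt_0_compat; lra.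
    apply Rmult_le_compat_l; lra. }
  assert (HGPI : Rabs (sin (a * PI) / (2 * a)) <= / (2 * a)).
  { apply abs_div_le. apply abs_sin_le. lra. }
  pose proof (alt_harm M) as HA.
  assert (E : cN M x + ln (2 * sin (x / 2)) =
     (FM M x - FM M PI) + (cN M PI + ln 2) - sin (a * PI) / (2 * a)
       + sin (a * x) / (2 * a * sin (x / 2))).
  { rewrite HFPI. unfold FM. fold a. ring. }
  rewrite E. set (T1 := FM M x - FM M PI) in *. set (T2 := cN M PI + ln 2) in *.
  apply Rle_trans with (B * PI + / (INR M + 2) + / (2 * a) + / (2 * a * s0)).
  { eapply Rle_trans. apply Rabs_triang. apply Rplus_le_compat; [|exact HG].
    eapply Rle_trans. unfold Rminus. apply Rabs_triang. rewrite Rabs_Ropp.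
    apply Rplus_le_compat; [|exact HGPI].
    eapply Rle_trans. apply Rabs_triang. lra. }
  unfold Cd. fold s0. unfold B.
  assert (HM2 : n1 <= INR M + 2) by (unfold n1; rewrite S_INR; lra).
  assert (K1 : / (INR M + 2) <= 1 / n1).
  { unfold Rdiv; rewrite Rmult_1_l. apply Rinv_le_contravar; lra. }
  assert (K2 : / (2 * a) <= (1/2) / n1).
  { replace ((1/2)/n1) with (/ (2 * n1)) by (field; lra). apply Rinv_le_contravar; lra. }
  assert (K3 : / (2 * a * s0) <= (1 / (2 * s0)) / n1).
  { replace ((1 / (2 * s0)) / n1) with (/ (2 * s0 * n1)) by (field; lra).
    apply Rinv_le_contravar. apply Rmult_lt_0_compat; lra.
    replace (2 * a * s0) with ((2 * s0) * a) by ring. apply Rmult_le_compat_l; lra. }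
  assert (K4 : / (4 * a * s0 ^ 2) * PI <= (PI / (4 * s0 ^ 2)) / n1).
  { replace ((PI / (4 * s0 ^ 2)) / n1) with (/ (4 * n1 * s0 ^ 2) * PI) by (field; lra).
    apply Rmult_le_compat_r. pose proof PI_RGT_0; lra.
    apply Rinv_le_contravar. apply Rmult_lt_0_compat; [lra| apply pow_lt; lra].
    apply Rmult_le_compat_r. apply pow_le; lra. lra. }
  replace ((PI / (4 * s0 ^ 2) + 1 + 1 / 2 + 1 / (2 * s0)) / n1) with
    (PI / (4 * s0 ^ 2) / n1 + 1 / n1 + (1/2) / n1 + (1 / (2 * s0)) / n1) by (field; lra).
  lra.
Qed.

Definition sN (N : nat) (y : R) := sum_n (fun m => sin (INR (S m) * y) / INR (S m) ^ 2) N.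

Lemma sN_derive N y : is_derive (sN N) y (cN N y).
Proof.
  unfold sN, cN.
  apply (is_derive_sum_n (fun m y => sin (INR (S m) * y) / INR (S m) ^ 2)).
  intros k _. auto_derive. exact I.
  change (match k with 0%nat => 1 | S _ => INR k + 1 end) with (INR (S k)).
  field. apply not_0_INR. lia.
Qed.

Lemma cN_derive N y : is_derive (cN N) y (- sum_n (fun m => sin (INR (S m) * y)) N).
Proof.
  unfold cN.
  replace (- sum_n (fun m => sin (INR (S m) * y)) N) with
      (sum_n (fun m => - sin (INR (S m) * y)) N).
  2:{ clear. induction N. rewrite !sum_O. reflexivity.
      rewrite !sum_Sn, IHN. unfold plus; simpl. ring. }
  apply (is_derive_sum_n (fun m y => cos (INR (S m) * y) / INR (S m))).
  intros k _. auto_derive. exact I.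
  change (match k with 0%nat => 1 | S _ => INR k + 1 end) with (INR (S k)).
  field. apply not_0_INR. lia.
Qed.

Lemma Cl2_derive th : 0 < th < 2 * PI -> is_derive Cl2 th (- ln (2 * sin (th / 2))).
Proof.
  intros Hth.
  set (d := Rmin th (2 * PI - th) / 2).
  assert (Hd : 0 < d < PI /\ d < th < 2 * PI - d).
  { unfold d. destruct (Rle_dec th (2 * PI - th)).
    rewrite Rmin_left by lra. lra. rewrite Rmin_right by lra. lra. }
  set (D := fun y => d < y < 2 * PI - d).
  assert (HDer : forall N y, Derive (sN N) y = cN N y).
  { intros. apply is_derive_unique. apply sN_derive. }
  pose proof (CVU_Derive sN D) as HC.
  assert (Hopen : open D).
  { apply (open_and (fun y => d < y) (fun y => y < 2 * PI - d)). apply open_gt. apply open_lt. }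
  assert (Hconn : is_connected D).
  { intros a b x Ha Hb Hx. unfold D in *. lra. }
  assert (Hcvu1 : CVU_dom sN D).
  { apply (mtest_cvu (fun m y => sin (INR (S m) * y) / INR (S m) ^ 2) (fun m => / INR (S m) ^ 2)).
    - intros n x _. apply abs_div_le. apply abs_sin_le. split; [apply pow_lt, lt_0_INR; lia| lra].
    - apply ex_series_inv_sq. }
  assert (Hcv2 : CVU_dom (fun n x => cN n x) D /\
     (forall x, D x -> is_lim_seq (fun n => cN n x) (- ln (2 * sin (x / 2))))).
  { apply (cvu_bound _ _ _ (fun n => Cd d * / INR (S n))).
    - intros n x Hx. unfold Rminus. rewrite Ropp_involutive.
      apply e_bound. lra. unfold D in Hx. lra.
    - replace (Finite 0) with (Rbar_mult (Cd d) 0) by (simpl; f_equal; ring).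
      apply is_lim_seq_scal_l. apply is_lim_seq_inv_n. }
  destruct Hcv2 as [Hcvu2 Hlim2].
  assert (HD : D th) by (unfold D; lra).
  specialize (HC Hopen Hconn Hcvu1).
  assert (HC' := HC (fun n x _ => ex_intro _ _ (sN_derive n x))).
  clear HC.
  assert (Hcont : forall n x, D x -> continuity_pt (Derive (sN n)) x).
  { intros n x _. apply (continuity_pt_ext (cN n)). intros; rewrite HDer; reflexivity.
    eapply is_derive_cont. apply cN_derive. }
  specialize (HC' Hcont).
  assert (Hcvu2' : CVU_dom (fun n x => Derive (sN n) x) D).
  { intros eps. destruct (Hcvu2 eps) as [N HN]. exists N. intros n Hn x Hx.
    specialize (HN n Hn x Hx). simpl in HN.
    rewrite HDer. rewrite (Lim_seq_ext _ (fun n => cN n x)) by (intros; apply HDer). exact HN. }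
  specialize (HC' Hcvu2' th HD).
  rewrite (Lim_seq_ext _ (fun n => cN n th)) in HC' by (intros; apply HDer).
  rewrite (is_lim_seq_unique _ _ (Hlim2 th HD)) in HC'. simpl in HC'.
  exact HC'.
Qed.

Lemma herglotz (g : R -> R) :
  (forall c, 0 <= c <= 1 -> continuity_pt g c) -> g 0 = 0 -> g 1 = 0 ->
  (forall x, 0 < x < 1 -> g (x / 2) + g ((x + 1) / 2) = 2 * g x) ->
  forall x, 0 <= x <= 1 -> g x = 0.
Proof.
  intros Hc H0 H1 Hd.
  set (h := fun x => Rabs (g x)).
  assert (Hhc : forall c, 0 <= c <= 1 -> continuity_pt h c).
  { intros c Hc'. apply (continuity_pt_comp g Rabs). auto. apply Rcontinuity_abs. }
  destruct (continuity_ab_maj h 0 1) as [x0 [Hmax Hx0]]. lra. exact Hhc.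
  set (M := h x0) in *.
  assert (HM : M = 0).
  { destruct (Req_dec x0 0) as [E|E]. unfold M, h. rewrite E, H0, Rabs_R0. reflexivity.
    destruct (Req_dec x0 1) as [E'|E']. unfold M, h. rewrite E', H1, Rabs_R0. reflexivity.
    assert (Hk : forall k, h (x0 * (/ 2) ^ k) = M).
    { induction k. simpl. rewrite Rmult_1_r. reflexivity.
      set (y := x0 * (/ 2) ^ k) in *.
      assert (Hy : 0 < y < 1).
      { unfold y. assert (0 < (/2) ^ k <= 1).
        split. apply pow_lt; lra. rewrite <- (pow1 k). apply pow_incr; lra.
        split. apply Rmult_lt_0_compat; lra. 
        apply Rle_lt_trans with (x0 * 1). apply Rmult_le_compat_l; lra. lra. }
      replace (x0 * (/ 2) ^ S k) with (y / 2) by (unfold y; simpl; field).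
      pose proof (Hd y Hy) as E2.
      assert (A1 : h (y / 2) <= M) by (apply Hmax; lra).
      assert (A2 : h ((y + 1) / 2) <= M) by (apply Hmax; lra).
      assert (A3 : 2 * M <= h (y / 2) + h ((y + 1) / 2)).
      { rewrite <- IHk. unfold h. replace (2 * Rabs (g y)) with (Rabs (2 * g y))
          by (rewrite Rabs_mult, (Rabs_pos_eq 2) by lra; reflexivity).
        rewrite <- E2. apply Rabs_triang. }
      lra. }
    assert (L1 : is_lim_seq (fun k => x0 * (/ 2) ^ k) 0).
    { replace (Finite 0) with (Rbar_mult x0 0) by (simpl; f_equal; ring).
      apply is_lim_seq_scal_l. apply is_lim_seq_geom. rewrite Rabs_pos_eq; lra. }
    pose proof (is_lim_seq_continuous h _ 0 (Hhc 0 ltac:(lra)) L1) as L2.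
    assert (L3 : is_lim_seq (fun k => h (x0 * (/ 2) ^ k)) M).
    { apply is_lim_seq_ext with (fun _ => M). intros; rewrite Hk; reflexivity. apply is_lim_seq_const. }
    pose proof (is_lim_seq_unique _ _ L2) as U2. pose proof (is_lim_seq_unique _ _ L3) as U3.
    rewrite U2 in U3. injection U3. intros E3. rewrite <- E3. unfold h. rewrite H0, Rabs_R0. reflexivity. }
  intros x Hx. specialize (Hmax x Hx). unfold h in Hmax. fold M in Hmax. rewrite HM in Hmax.
  pose proof (Rabs_pos (g x)). assert (Rabs (g x) = 0) by lra. apply Rabs_eq_0 in H2. exact H2.
Qed.

Lemma sin_le_id t : 0 <= t -> Rabs (sin t) <= t.
Proof.
  intros Ht. replace (sin t) with (sin t - sin 0) by (rewrite sin_0; ring).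
  replace t with ((fun s => s) t - (fun s => s) 0) at 2 by (simpl; ring).
  apply (deriv_bound sin cos (fun s => s) (fun _ => 1)); auto.
  - intros; apply is_derive_sin.
  - intros; auto_derive; auto.
  - intros; apply abs_cos_le.
Qed.

Lemma cos_m1_bound t : 0 <= t -> Rabs (cos t - 1) <= t ^ 2 / 2.
Proof.
  intros Ht. replace (cos t - 1) with (cos t - cos 0) by (rewrite cos_0; ring).
  replace (t ^ 2 / 2) with ((fun s => s ^ 2 / 2) t - (fun s => s ^ 2 / 2) 0) by (simpl; field).
  apply (deriv_bound cos (fun s => - sin s) (fun s => s ^ 2 / 2) (fun s => s)); auto.
  - intros; apply is_derive_cos.
  - intros; auto_derive; auto. field.
  - intros s Hs. rewrite Rabs_Ropp. apply sin_le_id. lra.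
Qed.

Lemma sin_m_id_bound t : 0 <= t -> Rabs (sin t - t) <= t ^ 3 / 6.
Proof.
  intros Ht. replace (sin t - t) with ((fun s => sin s - s) t - (fun s => sin s - s) 0)
    by (simpl; rewrite sin_0; ring).
  replace (t ^ 3 / 6) with ((fun s => s ^ 3 / 6) t - (fun s => s ^ 3 / 6) 0) by (simpl; field).
  apply (deriv_bound (fun s => sin s - s) (fun s => cos s - 1) (fun s => s ^ 3 / 6) (fun s => s ^ 2 / 2)); auto.
  - intros; auto_derive; auto. ring.
  - intros; auto_derive; auto. field.
  - intros s Hs. apply cos_m1_bound. lra.
Qed.

Lemma tcos_sin_bound t : 0 <= t -> Rabs (t * cos t - sin t) <= t ^ 3 / 3.
Proof.
  intros Ht. replace (t * cos t - sin t) with ((fun s => s * cos s - sin s) t - (fun s => s * cos s - sin s) 0)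
    by (simpl; rewrite sin_0; ring).
  replace (t ^ 3 / 3) with ((fun s => s ^ 3 / 3) t - (fun s => s ^ 3 / 3) 0) by (simpl; field).
  apply (deriv_bound (fun s => s * cos s - sin s) (fun s => - (s * sin s)) (fun s => s ^ 3 / 3) (fun s => s ^ 2)); auto.
  - intros; auto_derive; auto. ring.
  - intros; auto_derive; auto. field.
  - intros s Hs. rewrite Rabs_Ropp, Rabs_mult, Rabs_pos_eq by lra.
    replace (s ^ 2) with (s * s) by ring. apply Rmult_le_compat_l. lra. apply sin_le_id. lra.
Qed.

Lemma cot_bound y : 0 < y <= 1 -> Rabs (cos y / sin y - / y) <= y.
Proof.
  intros Hy.
  pose proof (sin_m_id_bound y ltac:(lra)) as H1. apply Rabs_le_between in H1.
  assert (Hs : 5 * y / 6 <= sin y).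
  { assert (y ^ 3 / 6 <= y / 6). { replace (y ^ 3) with (y * (y * y)) by ring.
      assert (y * y <= 1) by nra. unfold Rdiv. apply Rmult_le_compat_r. lra. nra. }
    lra. }
  pose proof (tcos_sin_bound y ltac:(lra)) as H2.
  replace (cos y / sin y - / y) with ((y * cos y - sin y) / (y * sin y)) by (field; lra).
  unfold Rdiv. rewrite Rabs_mult, Rabs_inv, (Rabs_pos_eq (y * sin y)) by nra.
  apply Rle_trans with ((y ^ 3 / 3) * / (y * (5 * y / 6))).
  apply Rmult_le_compat; try lra. apply Rabs_pos. apply Rlt_le, Rinv_0_lt_compat; nra.
  apply Rinv_le_contravar. nra. apply Rmult_le_compat_l; lra.
  replace (y ^ 3 / 3 * / (y * (5 * y / 6))) with (2 * y / 5) by (field; lra). lra.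
Qed.

Definition Kc (u : R) := if Req_EM_T u 0 then 0 else PI * cos (PI * u) / sin (PI * u) - / u.

Lemma Kc_bound u : u <> 0 -> Rabs (PI * u) <= 1 ->
  Rabs (PI * cos (PI * u) / sin (PI * u) - / u) <= PI * PI * Rabs u.
Proof.
  intros Hu Hb. pose proof PI_RGT_0 as HPI. pose proof PI2_3_2 as HP3.
  assert (E : forall v, 0 < v -> PI * v <= 1 ->
     Rabs (PI * cos (PI * v) / sin (PI * v) - / v) <= PI * PI * v).
  { intros v Hv Hv1.
    replace (PI * cos (PI * v) / sin (PI * v) - / v) with (PI * (cos (PI * v) / sin (PI * v) - / (PI * v)))
      by (assert (0 < sin (PI * v)) by (apply sin_gt_0; nra); field; repeat split; lra).
    rewrite Rabs_mult, Rabs_pos_eq by lra. rewrite Rmult_assoc. apply Rmult_le_compat_l. lra.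
    apply cot_bound. split; nra. }
  destruct (Rlt_dec 0 u).
  - rewrite (Rabs_pos_eq u) by lra. rewrite Rabs_pos_eq in Hb by nra. apply E; lra.
  - assert (u < 0) by lra. rewrite (Rabs_left u) by lra. rewrite Rabs_left in Hb by nra.
    replace (PI * cos (PI * u) / sin (PI * u) - / u) with (- (PI * cos (PI * (- u)) / sin (PI * (- u)) - / (- u))).
    rewrite Rabs_Ropp. apply E; lra.
    replace (PI * - u) with (- (PI * u)) by ring. rewrite cos_neg, sin_neg, Rinv_opp.
    unfold Rdiv. rewrite Rinv_opp. ring.
Qed.

Lemma Kc_cont0 : continuity_pt Kc 0.
Proof.
  apply continuity_pt_locally. intros eps. pose proof PI_RGT_0 as HPI.
  assert (Hd : 0 < Rmin (/ PI) (eps / (PI * PI))).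
  { apply Rmin_pos. apply Rinv_0_lt_compat; lra. apply Rdiv_lt_0_compat. apply cond_pos. nra. }
  exists (mkposreal _ Hd). intros u Hu. unfold ball in Hu; simpl in Hu. unfold AbsRing_ball, abs, minus, plus, opp in Hu; simpl in Hu.
  rewrite Ropp_0, Rplus_0_r in Hu.
  unfold Kc. destruct (Req_EM_T 0 0) as [_|C]; [|congruence].
  destruct (Req_EM_T u 0) as [E|E].
  - rewrite Rminus_0_r, Rabs_R0. apply cond_pos.
  - rewrite Rminus_0_r. eapply Rle_lt_trans. apply Kc_bound. exact E.
    rewrite Rabs_mult, Rabs_pos_eq by lra.
    apply Rle_trans with (PI * / PI). apply Rmult_le_compat_l. lra.
    apply Rlt_le. apply Rlt_le_trans with (1 := Hu). apply Rmin_l. right; field; lra.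
    apply Rlt_le_trans with (PI * PI * (eps / (PI * PI))).
    apply Rmult_lt_compat_l. nra. apply Rlt_le_trans with (1 := Hu). apply Rmin_r.
    right; field; lra.
Qed.

Definition phi_t (n : nat) (x : R) := / (x - INR n - 2) + / (x + INR n + 1).
Definition Phi (x : R) := Series (fun n => phi_t n x).

Lemma phi_bound n x : -1/2 < x < 3/2 -> Rabs (phi_t n x) <= 8 * / INR (S n) ^ 2.
Proof.
  intros Hx. pose proof (pos_INR n) as Hn. rewrite S_INR.
  unfold phi_t.
  replace (/ (x - INR n - 2) + / (x + INR n + 1)) with
     ((2 * x - 1) / ((x - INR n - 2) * (x + INR n + 1))) by (field; split; lra).
  unfold Rdiv. rewrite Rabs_mult, Rabs_inv, Rabs_mult.
  rewrite (Rabs_left (x - INR n - 2)) by lra. rewrite (Rabs_pos_eq (x + INR n + 1)) by lra.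
  apply Rle_trans with (2 * / ((INR n + 1/2) * (INR n + 1/2))).
  apply Rmult_le_compat. apply Rabs_pos. apply Rlt_le, Rinv_0_lt_compat. nra.
  apply Rabs_le. lra. apply Rinv_le_contravar. nra. apply Rmult_le_compat; lra.
  replace (8 * / (INR n + 1) ^ 2) with (2 * / ((INR n + 1) * (INR n + 1) / 4)) by (field; lra).
  apply Rmult_le_compat_l. lra. apply Rinv_le_contravar. nra. nra.
Qed.

Lemma ex_series_8 : ex_series (fun n => 8 * / INR (S n) ^ 2).
Proof.
  apply (@ex_series_scal_l R_AbsRing R_NormedModule 8 (fun n => / INR (S n) ^ 2)).
  apply ex_series_inv_sq.
Qed.

Lemma phi_ex x : -1/2 < x < 3/2 -> ex_series (fun n => phi_t n x).
Proof.
  intros Hx. apply (@ex_series_le R_AbsRing R_CompleteNormedModule _ (fun n => 8 * / INR (S n) ^ 2)).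
  intros n. apply phi_bound; auto. apply ex_series_8.
Qed.

Lemma Phi_cont x : -1/2 < x < 3/2 -> continuity_pt Phi x.
Proof.
  intros Hx.
  set (D := fun y => -1/2 < y /\ y < 3/2).
  pose proof (CVU_cont_open (fun N y => sum_n (fun n => phi_t n y) N) D) as HC.
  apply HC; clear HC.
  - apply (open_and (fun y => -1/2 < y) (fun y => y < 3/2)). apply open_gt. apply open_lt.
  - apply (mtest_cvu phi_t (fun n => 8 * / INR (S n) ^ 2)).
    intros n y Hy. apply phi_bound. unfold D in Hy; lra. apply ex_series_8.
  - intros n y Hy. unfold D in Hy. eapply is_derive_cont.
    apply (is_derive_sum_n (fun n y => phi_t n y) n y (fun k => - / (y - INR k - 2) ^ 2 - / (y + INR k + 1) ^ 2)).
    intros k _. pose proof (pos_INR k). unfold phi_t. auto_derive. repeat split; lra.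
    field_simplify; [reflexivity| |]; lra.
  - unfold D; lra.
Qed.

Lemma Phi_0 : Phi 0 = 1.
Proof.
  unfold Phi. apply is_series_unique.
  apply is_series_ext_R with (fun n => / INR (S n) - / INR (S (S n))).
  - intros n. unfold phi_t. rewrite !S_INR. pose proof (pos_INR n). field. lra.
  - replace 1 with (/ INR (S O) - 0) by (simpl; field).
    apply is_series_telescope with (f := fun n => / INR (S n)). apply is_lim_seq_inv_n.
Qed.

Lemma Phi_sym x : Phi (1 - x) = - Phi x.
Proof.
  unfold Phi. rewrite <- Series_opp. apply Series_ext. intros n. unfold phi_t.
  replace (1 - x - INR n - 2) with (- (x + INR n + 1)) by ring.
  replace (1 - x + INR n + 1) with (- (x - INR n - 2)) by ring.
  rewrite !Rinv_opp. ring.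
Qed.

Lemma phi_dup_partial x N : 0 < x < 1 ->
  sum_n (fun n => phi_t n (x / 2)) N + sum_n (fun n => phi_t n ((x + 1) / 2)) N
  = 2 * sum_n (fun n => phi_t n x) (2 * N + 1) - 2 / (x - 2) - 2 / (x + 1)
    + 2 / (x - 2 * INR N - 4) + 2 / (x + 2 * INR N + 3).
Proof.
  intros Hx. induction N.
  - simpl (2 * 0 + 1)%nat. rewrite !sum_Sn_R, !sum_O. unfold phi_t. simpl INR.
    field; repeat split; lra.
  - replace (2 * S N + 1)%nat with (S (S (2 * N + 1))) by lia.
    rewrite !sum_Sn_R.
    replace (sum_n (fun n : nat => phi_t n (x / 2)) N + phi_t (S N) (x / 2) +
      (sum_n (fun n : nat => phi_t n ((x + 1) / 2)) N + phi_t (S N) ((x + 1) / 2)))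
      with ((sum_n (fun n : nat => phi_t n (x / 2)) N + sum_n (fun n : nat => phi_t n ((x + 1) / 2)) N)
            + phi_t (S N) (x / 2) + phi_t (S N) ((x + 1) / 2)) by ring.
    rewrite IHN. unfold phi_t.
    rewrite !S_INR, plus_INR, mult_INR. simpl INR.
    pose proof (pos_INR N).
    field; repeat split; lra.
Qed.

Lemma Phi_dup x : 0 < x < 1 ->
  Phi (x / 2) + Phi ((x + 1) / 2) = 2 * Phi x - 2 / (x - 2) - 2 / (x + 1).
Proof.
  intros Hx.
  assert (S1 := lim_sum_n_R _ _ (Series_correct _ (phi_ex (x / 2) ltac:(lra)))).
  assert (S2 := lim_sum_n_R _ _ (Series_correct _ (phi_ex ((x + 1) / 2) ltac:(lra)))).
  assert (S3 := lim_sum_n_R _ _ (Series_correct _ (phi_ex x ltac:(lra)))).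
  fold (Phi (x / 2)) in S1. fold (Phi ((x + 1) / 2)) in S2. fold (Phi x) in S3.
  pose proof (is_lim_seq_plus' _ _ _ _ S1 S2) as L1.
  assert (S3' : is_lim_seq (fun N => sum_n (fun n => phi_t n x) (2 * N + 1)) (Phi x)).
  { apply (is_lim_seq_subseq (sum_n (fun n => phi_t n x)) (Phi x) (fun N => (2 * N + 1)%nat)).
    apply eventually_subseq. intros; lia. exact S3. }
  assert (Z1 : is_lim_seq (fun N => 2 / (x - 2 * INR N - 4)) 0).
  { apply lim_bound_inv with 2. intros N. pose proof (pos_INR N). rewrite S_INR.
    replace (2 / (x - 2 * INR N - 4)) with (- (2 / (2 * INR N + 4 - x))) by (field; lra).
    rewrite Rabs_Ropp, Rabs_pos_eq by (apply Rdiv_le_0_compat; lra).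
    unfold Rdiv. apply Rmult_le_compat_l. lra. apply Rinv_le_contravar; lra. }
  assert (Z2 : is_lim_seq (fun N => 2 / (x + 2 * INR N + 3)) 0).
  { apply lim_bound_inv with 2. intros N. pose proof (pos_INR N). rewrite S_INR.
    rewrite Rabs_pos_eq by (apply Rdiv_le_0_compat; lra).
    unfold Rdiv. apply Rmult_le_compat_l. lra. apply Rinv_le_contravar; lra. }
  assert (L2 : is_lim_seq (fun N => 2 * sum_n (fun n => phi_t n x) (2 * N + 1) - 2 / (x - 2) - 2 / (x + 1)
    + 2 / (x - 2 * INR N - 4) + 2 / (x + 2 * INR N + 3)) (2 * Phi x - 2 / (x - 2) - 2 / (x + 1) + 0 + 0)).
  { apply is_lim_seq_plus'. apply is_lim_seq_plus'. 
    apply is_lim_seq_minus'. apply is_lim_seq_minus'. apply is_lim_seq_scal_l_R. exact S3'.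
    apply is_lim_seq_const. apply is_lim_seq_const. exact Z1. exact Z2. }
  apply is_lim_seq_ext with (v := fun N => sum_n (fun n => phi_t n (x / 2)) N + sum_n (fun n => phi_t n ((x + 1) / 2)) N) in L2.
  2:{ intros N. rewrite phi_dup_partial by lra. reflexivity. }
  pose proof (is_lim_seq_unique _ _ L1) as U1. pose proof (is_lim_seq_unique _ _ L2) as U2.
  rewrite U1 in U2. injection U2. intros E. rewrite E. ring.
Qed.

Definition Hc (x : R) := PI * cos (PI * x) / sin (PI * x) - / x - / (x - 1).
Definition fc (x : R) := Hc x - Phi x.
Definition ft (x : R) := if Req_EM_T x 0 then 0 else if Req_EM_T x 1 then 0 else fc x.

Lemma Hc_sym x : Hc (1 - x) = - Hc x.
Proof.
  unfold Hc. replace (PI * (1 - x)) with (PI - PI * x) by ring.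
  rewrite sin_PI_x, cos_minus, cos_PI, sin_PI.
  replace (1 - x - 1) with (- x) by ring. replace (1 - x) with (- (x - 1)) by ring.
  rewrite !Rinv_opp. unfold Rdiv. ring.
Qed.

Lemma Hc_dup x : 0 < x < 1 -> Hc (x / 2) + Hc ((x + 1) / 2) = 2 * Hc x - 2 / (x - 2) - 2 / (x + 1).
Proof.
  intros Hx. pose proof PI_RGT_0. unfold Hc.
  set (y := PI * (x / 2)).
  assert (Hs : 0 < sin y) by (apply sin_gt_0; unfold y; nra).
  assert (Hc0 : 0 < cos y) by (apply cos_gt_0; unfold y; nra).
  replace (PI * ((x + 1) / 2)) with (y + PI / 2) by (unfold y; field).
  replace (PI * x) with (2 * y) by (unfold y; field).
  rewrite sin_plus, cos_plus, sin_PI2, cos_PI2, sin_2a, cos_2a.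
  field; repeat split; lra.
Qed.

Lemma fc_dup x : 0 < x < 1 -> fc (x / 2) + fc ((x + 1) / 2) = 2 * fc x.
Proof.
  intros Hx. unfold fc.
  replace (Hc (x / 2) - Phi (x / 2) + (Hc ((x + 1) / 2) - Phi ((x + 1) / 2))) with
    ((Hc (x / 2) + Hc ((x + 1) / 2)) - (Phi (x / 2) + Phi ((x + 1) / 2))) by ring.
  rewrite Hc_dup, Phi_dup by exact Hx. ring.
Qed.

Lemma fc_sym x : fc (1 - x) = - fc x.
Proof. unfold fc. rewrite Hc_sym, Phi_sym. ring. Qed.

Lemma ft_sym x : ft (1 - x) = - ft x.
Proof.
  unfold ft.
  destruct (Req_EM_T x 0) as [E|E].
  - subst. destruct (Req_EM_T (1 - 0) 0); [lra|]. destruct (Req_EM_T (1-0) 1); [ring|lra].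
  - destruct (Req_EM_T x 1) as [E'|E'].
    + subst. destruct (Req_EM_T (1 - 1) 0); [ring|lra].
    + destruct (Req_EM_T (1 - x) 0); [lra|]. destruct (Req_EM_T (1 - x) 1); [lra|].
      apply fc_sym.
Qed.

Lemma fc_cont c : 0 < c < 1 -> continuity_pt fc c.
Proof.
  intros Hc'. pose proof PI_RGT_0.
  assert (Hs : 0 < sin (PI * c)) by (apply sin_gt_0; nra).
  assert (C1 : continuity_pt Hc c).
  { eapply is_derive_cont. unfold Hc. auto_derive. repeat split; lra. reflexivity. }
  assert (C2 := Phi_cont c ltac:(lra)).
  apply (continuity_pt_ext_loc (Hc - Phi)%F). 
  apply filter_forall. intros; reflexivity.
  apply continuity_pt_minus; auto.
Qed.

Lemma ft_cont0 : continuity_pt ft 0.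
Proof.
  set (g := fun y => Kc y - / (y - 1) - Phi y).
  assert (Cg : continuity_pt g 0).
  { set (q := fun y : R => / (y - 1)).
    unfold g. apply (continuity_pt_ext_loc ((Kc - q) - Phi)%F).
    apply filter_forall. intros; reflexivity.
    apply continuity_pt_minus. apply continuity_pt_minus. apply Kc_cont0.
    eapply is_derive_cont. unfold q. auto_derive. lra. reflexivity.
    apply Phi_cont. lra. }
  apply (continuity_pt_ext_loc g). 2: exact Cg.
  assert (Hd : 0 < 1/2) by lra.
  exists (mkposreal _ Hd). intros y Hy. unfold ball in Hy; simpl in Hy.
  unfold AbsRing_ball, abs, minus, plus, opp in Hy; simpl in Hy.
  rewrite Ropp_0, Rplus_0_r in Hy. apply Rabs_lt_between in Hy.
  unfold g, ft, Kc. destruct (Req_EM_T y 0) as [E|E].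
  - subst. rewrite Phi_0. replace (0 - 1) with (- (1)) by ring. rewrite Rinv_opp, Rinv_1. ring.
  - destruct (Req_dec_T y 1); [lra|]. unfold fc, Hc. ring.
Qed.

Lemma ft_cont c : 0 <= c <= 1 -> continuity_pt ft c.
Proof.
  intros Hc'.
  destruct (Req_dec c 0) as [E|E]. subst. apply ft_cont0.
  destruct (Req_dec c 1) as [E'|E'].
  - subst. apply (continuity_pt_ext_loc (fun y => - ft (1 - y))).
    apply filter_forall. intros y. rewrite ft_sym. ring.
    apply (continuity_pt_opp (fun y => ft (1 - y))).
    apply (continuity_pt_comp (fun y => 1 - y) ft).
    eapply is_derive_cont. auto_derive; auto.
    replace (1 - 1) with 0 by ring. apply ft_cont0.
  - apply (continuity_pt_ext_loc fc). 2: apply fc_cont; lra.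
    assert (Hd : 0 < Rmin c (1 - c)) by (apply Rmin_pos; lra).
    exists (mkposreal _ Hd). intros y Hy. unfold ball in Hy; simpl in Hy.
    unfold AbsRing_ball, abs, minus, plus, opp in Hy; simpl in Hy.
    pose proof (Rmin_l c (1 - c)). pose proof (Rmin_r c (1 - c)).
    apply Rabs_lt_between in Hy.
    unfold ft. destruct (Req_EM_T y 0); [lra|]. destruct (Req_EM_T y 1); [lra|]. reflexivity.
Qed.

Lemma fc_zero x : 0 < x < 1 -> fc x = 0.
Proof.
  intros Hx.
  assert (H := herglotz ft ft_cont).
  assert (E0 : ft 0 = 0) by (unfold ft; destruct (Req_EM_T 0 0); [reflexivity|lra]).
  assert (E1 : ft 1 = 0) by (unfold ft; destruct (Req_EM_T 1 0); [lra|]; destruct (Req_EM_T 1 1); [reflexivity|lra]).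
  assert (Eq : forall y, 0 < y < 1 -> ft y = fc y).
  { intros y Hy. unfold ft. destruct (Req_EM_T y 0); [lra|]. destruct (Req_EM_T y 1); [lra|]. reflexivity. }
  rewrite <- Eq by exact Hx. apply H; auto; try lra.
  intros y Hy. rewrite !Eq by lra. apply fc_dup; exact Hy.
Qed.

Lemma pf_partial x N :
  @eq R (sum_n (fun n => / (x - INR (S n)) + / (x + INR (S n))) N)
  (/ (x - 1) + sum_n (fun n => phi_t n x) N - / (x - INR N - 2)).
Proof.
  induction N.
  - rewrite !sum_O. unfold phi_t. simpl INR. change (sum_n (fun n => phi_t n x) 0) with (phi_t 0 x). unfold phi_t; simpl INR. replace (x - 0 - 2) with (x - (1 + 1)) by ring.
    replace (x + 0 + 1) with (x + 1) by ring. ring.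
  - rewrite !sum_Sn_R, IHN. unfold phi_t. rewrite !S_INR. 
    replace (x - (INR N + 1 + 1)) with (x - INR N - 2) by ring.
    replace (x - (INR N + 1) - 2) with (x - INR N - 3) by ring.
    replace (x + (INR N + 1 + 1)) with (x + (INR N + 1) + 1) by ring.
    ring.
Qed.

Lemma cot_pf x : 0 < x < 1 ->
  is_series (fun n => 2 * x / (INR (S n) ^ 2 - x ^ 2)) (/ x - PI * cos (PI * x) / sin (PI * x)).
Proof.
  intros Hx.
  assert (E : / x - PI * cos (PI * x) / sin (PI * x) = - (/ (x - 1) + Phi x)).
  { pose proof (fc_zero x Hx) as F. unfold fc, Hc in F. lra. }
  rewrite E.
  apply is_series_ext_R with (fun n => - (/ (x - INR (S n)) + / (x + INR (S n)))).
  { intros n. pose proof (pos_INR n). rewrite S_INR.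
    assert (0 < (INR n + 1) ^ 2 - x ^ 2) by nra. field. repeat split; lra. }
  apply (is_series_opp (V := R_NormedModule)) with (a := fun n => / (x - INR (S n)) + / (x + INR (S n))).
  apply is_series_from_lim.
  apply is_lim_seq_ext with (fun N => / (x - 1) + sum_n (fun n => phi_t n x) N - / (x - INR N - 2)).
  { intros N. rewrite pf_partial. reflexivity. }
  replace (Finite (/ (x - 1) + Phi x)) with (Finite (/ (x - 1) + Phi x - 0)) by (f_equal; ring).
  apply is_lim_seq_minus'. apply is_lim_seq_plus'. apply is_lim_seq_const.
  apply lim_sum_n_R. apply Series_correct. apply phi_ex. lra.
  apply lim_bound_inv with 1. intros N. pose proof (pos_INR N). rewrite S_INR.
  replace (/ (x - INR N - 2)) with (- (1 / (INR N + 2 - x))) by (field; lra).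
  rewrite Rabs_Ropp, Rabs_pos_eq by (apply Rdiv_le_0_compat; lra).
  unfold Rdiv. apply Rmult_le_compat_l. lra. apply Rinv_le_contravar; lra.
Qed.

Lemma sum_n_mono (a : nat -> R) N M : (forall n, 0 <= a n) -> (N <= M)%nat -> sum_n a N <= sum_n a M.
Proof.
  intros Ha H. induction H. lra. rewrite sum_Sn_R. specialize (Ha (S m)). lra.
Qed.

Lemma partial_le (a : nat -> R) (l : R) N : (forall n, 0 <= a n) -> is_series a l -> sum_n a N <= l.
Proof.
  intros Ha Hs.
  assert (Rbar_le (sum_n a N) l).
  { apply (is_lim_seq_le_loc (fun _ => sum_n a N) (sum_n a)).
    exists N. intros M HM. apply sum_n_mono; auto.
    apply is_lim_seq_const. exact Hs. }
  exact H.
Qed.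

Lemma sum_n_nonneg (a : nat -> R) N : (forall n, 0 <= a n) -> 0 <= sum_n a N.
Proof.
  intros Ha. induction N. rewrite sum_O. apply Ha. rewrite sum_Sn_R. specialize (Ha (S N)). lra.
Qed.

Lemma sum_n_le (a b : nat -> R) N : (forall n, a n <= b n) -> sum_n a N <= sum_n b N.
Proof.
  intros H. induction N. rewrite !sum_O. apply H. rewrite !sum_Sn_R. specialize (H (S N)). lra.
Qed.

Lemma finite_sum_lim (u : nat -> nat -> R) (l : nat -> R) K :
  (forall k, is_lim_seq (fun N => u k N) (l k)) ->
  is_lim_seq (fun N => sum_n (fun k => u k N) K) (sum_n l K).
Proof.
  intros H. induction K.
  - rewrite sum_O. apply is_lim_seq_ext with (fun N => u O N). intros; rewrite sum_O; reflexivity. apply H.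
  - rewrite sum_Sn_R. apply is_lim_seq_ext with (fun N => sum_n (fun k => u k N) K + u (S K) N).
    intros; rewrite sum_Sn_R; reflexivity.
    apply is_lim_seq_plus'; auto.
Qed.

Lemma tonelli (a : nat -> nat -> R) (r : nat -> R) (B : R) :
  (forall k n, 0 <= a k n) ->
  (forall n, is_series (fun k => a k n) (r n)) -> is_series r B ->
  (forall k, ex_series (fun n => a k n)) /\ is_series (fun k => Series (fun n => a k n)) B.
Proof.
  intros Ha Hr HB.
  assert (Hr0 : forall n, 0 <= r n).
  { intros n. apply Rle_trans with (sum_n (fun k => a k n) O). apply sum_n_nonneg. auto.
    apply partial_le. auto. apply Hr. }
  assert (Hex : forall k, ex_series (fun n => a k n)).
  { intros k. apply (@ex_series_le R_AbsRing R_CompleteNormedModule _ r).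
    intros n. unfold norm; simpl; unfold abs; simpl. rewrite Rabs_pos_eq by auto.
    apply Rle_trans with (sum_n (fun k => a k n) k).
    - destruct k. rewrite sum_O. lra. rewrite sum_Sn_R. pose proof (sum_n_nonneg (fun k => a k n) k (fun k => Ha k n)). lra.
    - apply partial_le; auto.
    - eexists; exact HB. }
  split; [exact Hex|].
  set (c := fun k => Series (fun n => a k n)).
  assert (Hc : forall k, is_series (fun n => a k n) (c k)) by (intros; apply Series_correct, Hex).
  assert (Hc0 : forall k, 0 <= c k).
  { intros k. apply Rle_trans with (sum_n (fun n => a k n) O). apply sum_n_nonneg. auto.
    apply partial_le. auto. apply Hc. }
  assert (Hup : forall K, sum_n c K <= B).
  { intros K.
    assert (L : is_lim_seq (fun N => sum_n (fun k => sum_n (fun n => a k n) N) K) (sum_n c K)).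
    { apply finite_sum_lim. intros k. apply lim_sum_n_R. apply Hc. }
    assert (Rbar_le (sum_n c K) B).
    { apply (is_lim_seq_le (fun N => sum_n (fun k => sum_n (fun n => a k n) N) K) (fun _ => B) _ _) ; [| exact L | apply is_lim_seq_const].
      intros N. rewrite sum_n_switch. apply Rle_trans with (sum_n r N).
      apply sum_n_le. intros n. apply partial_le. auto. apply Hr.
      apply partial_le; auto. }
    exact H. }
  assert (Hinc : forall K, sum_n c K <= sum_n c (S K)).
  { intros K. rewrite sum_Sn_R. specialize (Hc0 (S K)). lra. }
  destruct (ex_finite_lim_seq_incr (sum_n c) B Hinc Hup) as [L HL].
  assert (HLB : L <= B).
  { assert (Rbar_le L B). apply (is_lim_seq_le (sum_n c) (fun _ => B) _ _ Hup HL). apply is_lim_seq_const. exact H. }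
  assert (HBL : B <= L).
  { assert (Hn : forall N, sum_n r N <= L).
    { intros N.
      assert (L2 : is_lim_seq (fun K => sum_n (fun n => sum_n (fun k => a k n) K) N) (sum_n r N)).
      { apply finite_sum_lim. intros n. apply lim_sum_n_R. apply Hr. }
      assert (Rbar_le (sum_n r N) L).
      { apply (is_lim_seq_le (fun K => sum_n (fun n => sum_n (fun k => a k n) K) N) (sum_n c) _ _); [| exact L2 | exact HL].
        intros K. rewrite <- sum_n_switch. apply sum_n_le. intros k. apply partial_le. auto. apply Hc. }
      exact H. }
    assert (Rbar_le B L). apply (is_lim_seq_le (sum_n r) (fun _ => L) _ _ Hn (lim_sum_n_R _ _ HB)). apply is_lim_seq_const. exact H. }
  apply is_series_from_lim. replace B with L by lra. exact HL.
Qed.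

Lemma ln_le_sub1 z : 0 < z -> ln z <= z - 1.
Proof. intros Hz. pose proof (exp_ineq1_le (ln z)). rewrite exp_ln in H by exact Hz. lra. Qed.

Lemma series_derive (u du : nat -> R -> R) (M M' : nat -> R) (l r x : R) :
  l < x < r ->
  (forall k y, l < y < r -> is_derive (u k) y (du k y)) ->
  (forall k y, l < y < r -> continuity_pt (du k) y) ->
  (forall k y, l < y < r -> Rabs (u k y) <= M k) -> ex_series M ->
  (forall k y, l < y < r -> Rabs (du k y) <= M' k) -> ex_series M' ->
  is_derive (fun y => Series (fun k => u k y)) x (Series (fun k => du k x)).
Proof.
  intros Hx Hd Hc HM HMs HM' HM's.
  set (D := fun y => l < y /\ y < r).
  set (fn := fun N y => sum_n (fun k => u k y) N).
  assert (HDer : forall N y, D y -> Derive (fn N) y = sum_n (fun k => du k y) N).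
  { intros N y Hy. apply is_derive_unique. unfold fn.
    apply (is_derive_sum_n (fun k y => u k y)). intros k _. apply Hd. exact Hy. }
  assert (Hopen : open D).
  { apply (open_and (fun y => l < y) (fun y => y < r)). apply open_gt. apply open_lt. }
  pose proof (CVU_Derive fn D Hopen) as HC.
  assert (Hconn : is_connected D) by (intros a b z Ha Hb Hz; unfold D in *; lra).
  specialize (HC Hconn (mtest_cvu u M D HM HMs)).
  assert (HC1 : forall n y, D y -> ex_derive (fn n) y).
  { intros n y Hy. eexists. unfold fn. apply (is_derive_sum_n (fun k y => u k y)).
    intros k _. apply Hd. exact Hy. }
  specialize (HC HC1).
  assert (HC2 : forall n y, D y -> continuity_pt (Derive (fn n)) y).
  { intros n y Hy. apply (continuity_pt_ext_loc (fun y => sum_n (fun k => du k y) n)).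
    - assert (Hd0 : 0 < Rmin (y - l) (r - y)) by (unfold D in Hy; apply Rmin_pos; lra).
      exists (mkposreal _ Hd0). intros z Hz. unfold ball in Hz; simpl in Hz.
      unfold AbsRing_ball, abs, minus, plus, opp in Hz; simpl in Hz.
      apply Rabs_lt_between in Hz. pose proof (Rmin_l (y - l) (r - y)). pose proof (Rmin_r (y - l) (r - y)).
      symmetry. apply HDer. unfold D; lra.
    - clear -Hc Hy. induction n.
      + apply (continuity_pt_ext (du O)). intros; rewrite sum_O; reflexivity. apply Hc; exact Hy.
      + apply (continuity_pt_ext ((fun y => sum_n (fun k => du k y) n) + du (S n))%F).
        intros; rewrite sum_Sn_R; reflexivity.
        apply continuity_pt_plus; auto. }
  specialize (HC HC2).
  assert (HC3 : CVU_dom (fun n y => Derive (fn n) y) D).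
  { pose proof (mtest_cvu du M' D HM' HM's) as H3.
    intros eps. destruct (H3 eps) as [N HN]. exists N. intros n Hn y Hy.
    specialize (HN n Hn y Hy). simpl in HN. rewrite HDer by exact Hy.
    rewrite (Lim_seq_ext _ (fun n => sum_n (fun k => du k y) n)) by (intros; apply HDer; exact Hy).
    exact HN. }
  specialize (HC HC3 x ltac:(unfold D; lra)).
  rewrite (Lim_seq_ext _ (fun n => sum_n (fun k => du k x) n)) in HC by (intros; apply HDer; unfold D; lra).
  exact HC.
Qed.

Lemma pow_decr_exp r n m : 0 <= r <= 1 -> (n <= m)%nat -> r ^ m <= r ^ n.
Proof.
  intros Hr H. replace m with (n + (m - n))%nat by lia. rewrite pow_add.
  rewrite <- (Rmult_1_r (r ^ n)) at 2. apply Rmult_le_compat_l. apply pow_le; lra.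
  rewrite <- (pow1 (m - n)). apply pow_incr. lra.
Qed.

Lemma abs_pow_le y r k j : Rabs y <= r -> r <= 1 -> Rabs (y ^ (2 * k + j)) <= r ^ k.
Proof.
  intros Hy Hr. rewrite <- RPow_abs. apply Rle_trans with (r ^ (2 * k + j)).
  apply pow_incr. split. apply Rabs_pos. exact Hy.
  apply pow_decr_exp. split; [|exact Hr]. pose proof (Rabs_pos y); lra. lia.
Qed.

Definition zt (k : nat) := zeta (INR (2 * S k)).
Definition Z2 := Series (fun n => / INR (S n) ^ 2).

Lemma inv_pow_le m e : 1 <= m -> (2 <= e)%nat -> / m ^ e <= / m ^ 2.
Proof.
  intros Hm He. apply Rinv_le_contravar. apply pow_lt; lra. apply Rle_pow; auto.
Qed.

Lemma zeta_series k : is_series (fun n => / INR (S n) ^ (2 * S k)) (zt k).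
Proof.
  unfold zt, zeta.
  assert (E : forall n, / Rpower (INR n + 1) (INR (2 * S k)) = / INR (S n) ^ (2 * S k)).
  { intros n. rewrite Rpower_pow, S_INR. reflexivity. pose proof (pos_INR n); lra. }
  rewrite (Series_ext _ _ E). apply Series_correct.
  apply (@ex_series_le R_AbsRing R_CompleteNormedModule _ (fun n => / INR (S n) ^ 2)).
  - intros n. assert (H : 1 <= INR (S n)) by (apply (le_INR 1); lia).
    revert H. generalize (INR (S n)). intros t Ht.
    change (norm (/ t ^ (2 * S k))) with (Rabs (/ t ^ (2 * S k))).
    rewrite Rabs_pos_eq by (apply Rlt_le, Rinv_0_lt_compat, pow_lt; lra).
    apply inv_pow_le; auto. lia.
  - apply ex_series_inv_sq.
Qed.

Lemma zt_bound k : 0 <= zt k <= Z2.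
Proof.
  rewrite <- (is_series_unique _ _ (zeta_series k)). split.
  - apply Rle_trans with (sum_n (fun n => / INR (S n) ^ (2 * S k)) O).
    rewrite sum_O. apply Rlt_le, Rinv_0_lt_compat, pow_lt, lt_0_INR; lia.
    apply partial_le. intros n. apply Rlt_le, Rinv_0_lt_compat, pow_lt, lt_0_INR; lia.
    apply Series_correct. eexists; apply zeta_series.
  - unfold Z2. apply Series_le. intros n.
    assert (1 <= INR (S n)) by (apply (le_INR 1); lia).
    split. apply Rlt_le, Rinv_0_lt_compat, pow_lt; lra. apply inv_pow_le; auto. lia.
    apply ex_series_inv_sq.
Qed.

Definition uT (k : nat) (x : R) := zt k * x ^ (2 * k + 3) / (INR (S k) * (2 * INR (S k) + 1)).
Definition u1 (k : nat) (x : R) := zt k * x ^ (2 * k + 2) / INR (S k).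
Definition u2 (k : nat) (x : R) := 2 * zt k * x ^ (2 * k + 1).

Lemma uT_derive k y : is_derive (uT k) y (u1 k y).
Proof.
  unfold uT, u1. pose proof (lt_0_INR (S k) (Nat.lt_0_succ k)).
  auto_derive. exact I.
  change (match k with 0%nat => 1 | S _ => INR k + 1 end) with (INR (S k)).
  replace (Init.Nat.pred (k + (k + 0) + 3)) with (2 * k + 2)%nat by lia.
  replace (INR (k + (k + 0) + 3)) with (2 * INR (S k) + 1)
    by (rewrite !plus_INR, S_INR; simpl; ring).
  field. lra.
Qed.

Lemma u1_derive k y : is_derive (u1 k) y (u2 k y).
Proof.
  unfold u1, u2. pose proof (lt_0_INR (S k) (Nat.lt_0_succ k)).
  auto_derive. exact I.
  change (match k with 0%nat => 1 | S _ => INR k + 1 end) with (INR (S k)).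
  replace (Init.Nat.pred (k + (k + 0) + 2)) with (2 * k + 1)%nat by lia.
  replace (INR (k + (k + 0) + 2)) with (2 * INR (S k))
    by (rewrite !plus_INR, S_INR; simpl; ring).
  field. lra.
Qed.

Lemma u2_cont k y : continuity_pt (u2 k) y.
Proof. unfold u2. eapply is_derive_cont. auto_derive; auto. Qed.

Lemma u1_cont k y : continuity_pt (u1 k) y.
Proof. eapply is_derive_cont. apply u1_derive. Qed.

Lemma Z2_nonneg : 0 <= Z2.
Proof. pose proof (zt_bound O). lra. Qed.

Lemma uT_bound k y r : Rabs y <= r -> r <= 1 -> Rabs (uT k y) <= Z2 * r ^ k.
Proof.
  intros Hy Hr. unfold uT. pose proof (lt_0_INR (S k) (Nat.lt_0_succ k)).
  assert (1 <= INR (S k)) by (apply (le_INR 1); lia). pose proof (zt_bound k).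
  unfold Rdiv. rewrite !Rabs_mult, Rabs_inv, (Rabs_pos_eq (zt k)) by lra.
  rewrite (Rabs_pos_eq (INR (S k) * (2 * INR (S k) + 1))) by nra.
  apply Rle_trans with (zt k * r ^ k * 1).
  apply Rmult_le_compat. apply Rmult_le_pos; [lra|apply Rabs_pos].
  apply Rlt_le, Rinv_0_lt_compat; nra.
  apply Rmult_le_compat_l. lra. apply abs_pow_le; auto.
  rewrite <- Rinv_1. apply Rinv_le_contravar. lra. nra.
  rewrite Rmult_1_r. apply Rmult_le_compat_r. apply pow_le. pose proof (Rabs_pos y); lra. lra.
Qed.

Lemma u1_bound k y r : Rabs y <= r -> r <= 1 -> Rabs (u1 k y) <= Z2 * r ^ k.
Proof.
  intros Hy Hr. unfold u1. pose proof (lt_0_INR (S k) (Nat.lt_0_succ k)).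
  assert (1 <= INR (S k)) by (apply (le_INR 1); lia). pose proof (zt_bound k).
  unfold Rdiv. rewrite !Rabs_mult, Rabs_inv, (Rabs_pos_eq (zt k)) by lra.
  rewrite (Rabs_pos_eq (INR (S k))) by nra.
  apply Rle_trans with (zt k * r ^ k * 1).
  apply Rmult_le_compat. apply Rmult_le_pos; [lra|apply Rabs_pos].
  apply Rlt_le, Rinv_0_lt_compat; nra.
  apply Rmult_le_compat_l. lra. apply abs_pow_le; auto.
  rewrite <- Rinv_1. apply Rinv_le_contravar. lra. nra.
  rewrite Rmult_1_r. apply Rmult_le_compat_r. apply pow_le. pose proof (Rabs_pos y); lra. lra.
Qed.

Lemma u2_bound k y r : Rabs y <= r -> r <= 1 -> Rabs (u2 k y) <= 2 * Z2 * r ^ k.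
Proof.
  intros Hy Hr. unfold u2. pose proof (zt_bound k).
  rewrite !Rabs_mult, (Rabs_pos_eq (zt k)) by lra. rewrite Rabs_pos_eq by lra.
  apply Rmult_le_compat. nra. apply Rabs_pos. nra. apply abs_pow_le; auto.
Qed.

Lemma ex_series_geom_c c r : 0 <= r < 1 -> ex_series (fun k => c * r ^ k).
Proof.
  intros Hr. apply (@ex_series_scal_l R_AbsRing R_NormedModule c (fun k => r ^ k)).
  apply ex_series_geom. rewrite Rabs_pos_eq; lra.
Qed.

Definition Tf (x : R) := Series (fun k => uT k x).
Definition T1 (x : R) := Series (fun k => u1 k x).
Definition T2 (x : R) := Series (fun k => u2 k x).

Lemma series_derive_T (u du : nat -> R -> R) (C C' : R) x :
  -1 < x < 1 ->
  (forall k y, is_derive (u k) y (du k y)) ->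
  (forall k y, continuity_pt (du k) y) ->
  (forall k y r, Rabs y <= r -> r <= 1 -> Rabs (u k y) <= C * r ^ k) ->
  (forall k y r, Rabs y <= r -> r <= 1 -> Rabs (du k y) <= C' * r ^ k) ->
  is_derive (fun y => Series (fun k => u k y)) x (Series (fun k => du k x)).
Proof.
  intros Hx Hd Hc Hb Hb'. set (r := (1 + Rabs x) / 2).
  assert (Ha : Rabs x < 1) by (apply Rabs_def1; lra).
  assert (Hr : Rabs x < r < 1) by (unfold r; lra).
  destruct (Rabs_def2 x r) as [Hx1 Hx2]. lra.
  assert (Hy : forall y, - r < y < r -> Rabs y <= r) by (intros y Hy; apply Rabs_le; lra).
  apply (series_derive u du (fun k => C * r ^ k) (fun k => C' * r ^ k) (- r) r x).
  - lra.
  - intros; apply Hd.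
  - intros; apply Hc.
  - intros k y Hy'. apply Hb. apply Hy; auto. lra.
  - apply ex_series_geom_c. pose proof (Rabs_pos x). lra.
  - intros k y Hy'. apply Hb'. apply Hy; auto. lra.
  - apply ex_series_geom_c. pose proof (Rabs_pos x). lra.
Qed.

Lemma Tf_derive x : -1 < x < 1 -> is_derive Tf x (T1 x).
Proof.
  intros Hx. apply (series_derive_T uT u1 Z2 Z2 x Hx uT_derive u1_cont uT_bound u1_bound).
Qed.

Lemma T1_derive x : -1 < x < 1 -> is_derive T1 x (T2 x).
Proof.
  intros Hx. apply (series_derive_T u1 u2 Z2 (2 * Z2) x Hx u1_derive u2_cont u1_bound u2_bound).
Qed.

Lemma T2_value x : 0 < x < 1 -> T2 x = / x - PI * cos (PI * x) / sin (PI * x).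
Proof.
  intros Hx.
  set (a := fun k n => 2 * x ^ (2 * k + 1) * / INR (S n) ^ (2 * S k)).
  set (r := fun n => 2 * x / (INR (S n) ^ 2 - x ^ 2)).
  assert (Ha : forall k n, 0 <= a k n).
  { intros k n. unfold a. apply Rmult_le_pos. apply Rmult_le_pos. lra. apply pow_le; lra.
    apply Rlt_le, Rinv_0_lt_compat, pow_lt, lt_0_INR; lia. }
  assert (Hr : forall n, is_series (fun k => a k n) (r n)).
  { intros n. set (m := INR (S n)).
    assert (Hm : 1 <= m) by (unfold m; apply (le_INR 1); lia).
    set (q := x ^ 2 / m ^ 2).
    assert (Hq : 0 <= q < 1).
    { unfold q. split. apply Rdiv_le_0_compat. apply pow_le; lra. apply pow_lt; lra.
      apply Rmult_lt_reg_r with (m ^ 2). apply pow_lt; lra. unfold Rdiv.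
      rewrite Rmult_assoc, Rinv_l, Rmult_1_r, Rmult_1_l. simpl. nra. apply pow_nonzero; lra. }
    apply is_series_ext_R with (fun k => (2 * x / m ^ 2) * q ^ k).
    { intros k. unfold a, q. fold m. unfold Rdiv. rewrite Rpow_mult_distr, pow_inv, <- !pow_mult.
      replace (2 * S k)%nat with (2 * k + 2)%nat by lia. replace (2 * k)%nat with (k * 2)%nat by lia.
      rewrite !pow_add.
      assert (0 < m ^ (k * 2)) by (apply pow_lt; lra).
      simpl. field. lra. }
    replace (r n) with ((2 * x / m ^ 2) * / (1 - q)).
    apply (@is_series_scal_l R_AbsRing R_NormedModule (2 * x / m ^ 2) (fun k => q ^ k)).
    apply is_series_geom. rewrite Rabs_pos_eq; lra.
    unfold r, q. fold m. assert (0 < m ^ 2 - x ^ 2) by (simpl; nra). field. split; simpl; nra. }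
  pose proof (tonelli a r _ Ha Hr (cot_pf x Hx)) as [_ HT].
  unfold T2. rewrite <- (is_series_unique _ _ HT). apply Series_ext. intros k.
  unfold u2, a. rewrite Series_scal_l. rewrite (is_series_unique _ _ (zeta_series k)). ring.
Qed.

Lemma small0 (f : R -> R) : continuity_pt f 0 -> f 0 = 0 ->
  forall eps, 0 < eps -> exists d, 0 < d /\ forall y, 0 < y < d -> Rabs (f y) < eps.
Proof.
  intros Hc H0 eps He.
  destruct (proj1 (continuity_pt_locally f 0) Hc (mkposreal _ He)) as [d Hd]. exists d. split. apply cond_pos.
  intros y Hy. specialize (Hd y). rewrite H0, Rminus_0_r in Hd. apply Hd.
  unfold ball; simpl. unfold AbsRing_ball, abs, minus, plus, opp; simpl.
  rewrite Ropp_0, Rplus_0_r, Rabs_pos_eq; lra.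
Qed.

Lemma zero_of_small a : (forall eps, 0 < eps -> Rabs a < eps) -> a = 0.
Proof.
  intros H. destruct (Req_dec a 0) as [E|E]; auto.
  assert (0 < Rabs a) by (apply Rabs_pos_lt; auto). specialize (H _ H0). lra.
Qed.

Lemma Series_zero (a : nat -> R) : (forall n, a n = 0) -> Series a = 0.
Proof.
  intros H. rewrite (Series_ext a (fun n => 0 * 0)) by (intros; rewrite H; ring).
  rewrite Series_scal_l. ring.
Qed.

Lemma Tf_0 : Tf 0 = 0.
Proof. apply Series_zero. intros k. unfold uT. rewrite pow_i by lia. unfold Rdiv. ring. Qed.

Lemma T1_0 : T1 0 = 0.
Proof. apply Series_zero. intros k. unfold u1. rewrite pow_i by lia. unfold Rdiv. ring. Qed.

Lemma Cl2_0 : Cl2 0 = 0.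
Proof. apply Series_zero. intros k. rewrite Rmult_0_r, sin_0. unfold Rdiv. ring. Qed.

Lemma Cl2_cont x : continuity_pt Cl2 x.
Proof.
  pose proof (CVU_cont_open sN (fun _ => True)) as HC.
  apply (HC open_true).
  - apply (mtest_cvu (fun m y => sin (INR (S m) * y) / INR (S m) ^ 2) (fun m => / INR (S m) ^ 2)).
    + intros n y _. apply abs_div_le. apply abs_sin_le. split; [apply pow_lt, lt_0_INR; lia| lra].
    + apply ex_series_inv_sq.
  - intros n y _. eapply is_derive_cont. apply sN_derive.
  - exact I.
Qed.

Definition Ef (y : R) := T1 y - ln (2 * PI * y) + ln (2 * sin (PI * y)).

Lemma Ef_derive y : 0 < y < 1 -> is_derive Ef y 0.
Proof.
  intros Hy. pose proof PI_RGT_0.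
  assert (Hs : 0 < sin (PI * y)) by (apply sin_gt_0; nra).
  pose proof (T1_derive y ltac:(lra)) as D1.
  assert (D2 : is_derive (fun y => - ln (2 * PI * y) + ln (2 * sin (PI * y))) y
                 (- / y + PI * cos (PI * y) / sin (PI * y))).
  { auto_derive. repeat split; nra. field. repeat split; lra. }
  pose proof (is_derive_plus _ _ _ _ _ D1 D2) as D.
  unfold Ef. replace 0 with (plus (T2 y) (- / y + PI * cos (PI * y) / sin (PI * y))).
  eapply is_derive_ext; [|exact D]. intros t. simpl. unfold plus; simpl. ring.
  rewrite T2_value by exact Hy. unfold plus; simpl. ring.
Qed.

Lemma ln_sinc_bound t : 0 < t <= 1 -> Rabs (ln (sin t / t)) <= t ^ 2 / 5.
Proof.
  intros Ht.
  pose proof (sin_le_id t ltac:(lra)) as H1. apply Rabs_le_between in H1.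
  pose proof (sin_m_id_bound t ltac:(lra)) as H2. apply Rabs_le_between in H2.
  assert (Ht3 : t ^ 3 / 6 <= t / 6) by (simpl; assert (t * t <= 1) by nra; nra).
  set (w := sin t / t).
  assert (Hw1 : w <= 1) by (unfold w; apply Rmult_le_reg_r with t; [lra|]; unfold Rdiv; rewrite Rmult_assoc, Rinv_l by lra; lra).
  assert (Hw2 : 1 - t ^ 2 / 6 <= w).
  { unfold w. apply Rmult_le_reg_r with t; [lra|]. unfold Rdiv. rewrite Rmult_assoc, Rinv_l by lra.
    simpl. simpl in H2. nra. }
  assert (Hw3 : 5 / 6 <= w) by (simpl in Hw2; nra).
  assert (L1 : ln w <= 0) by (pose proof (ln_le_sub1 w ltac:(lra)); lra).
  assert (L2 : - ln w <= t ^ 2 / 5).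
  { rewrite <- ln_Rinv by lra. eapply Rle_trans. apply ln_le_sub1. apply Rinv_0_lt_compat; lra.
    apply Rle_trans with ((1 - w) / w). right. field. lra.
    apply Rle_trans with ((t ^ 2 / 6) / (5 / 6)).
    unfold Rdiv. apply Rmult_le_compat. lra. apply Rlt_le, Rinv_0_lt_compat; lra. lra.
    apply Rinv_le_contravar; lra. right; field. }
  rewrite Rabs_left1 by lra. lra.
Qed.

Lemma Ef_small eps : 0 < eps -> exists y, 0 < y < 1 /\ Rabs (Ef y) < eps.
Proof.
  intros He. pose proof PI_RGT_0. pose proof PI_4.
  destruct (small0 T1 (is_derive_cont _ _ _ (T1_derive 0 ltac:(lra))) T1_0 (eps / 2) ltac:(lra)) as [d [Hd HT]].
  set (y := Rmin (d / 2) (Rmin (/ 4) (eps / 16))).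
  assert (Hy : 0 < y) by (unfold y; repeat apply Rmin_pos; lra).
  assert (Hy1 : y <= d / 2) by apply Rmin_l.
  assert (Hy2 : y <= / 4) by (eapply Rle_trans; [apply Rmin_r| apply Rmin_l]).
  assert (Hy3 : y <= eps / 16) by (eapply Rle_trans; [apply Rmin_r| apply Rmin_r]).
  exists y. split. lra.
  unfold Ef.
  assert (Hs : 0 < sin (PI * y)) by (apply sin_gt_0; nra).
  replace (T1 y - ln (2 * PI * y) + ln (2 * sin (PI * y))) with (T1 y + ln (sin (PI * y) / (PI * y))).
  2:{ rewrite ln_div by nra. rewrite !ln_mult by nra. ring. }
  eapply Rle_lt_trans. apply Rabs_triang.
  assert (A1 : Rabs (T1 y) < eps / 2) by (apply HT; lra).
  assert (A2 : Rabs (ln (sin (PI * y) / (PI * y))) <= (PI * y) ^ 2 / 5) by (apply ln_sinc_bound; nra).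
  assert ((PI * y) ^ 2 / 5 <= eps / 4).
  { replace ((PI * y) ^ 2) with ((PI * y) * (PI * y)) by ring.
    assert (PI * y <= 1) by nra. assert (PI * y <= 4 * y) by nra.
    assert (PI * y * (PI * y) <= 1 * (PI * y)) by (apply Rmult_le_compat_r; nra). lra. }
  lra.
Qed.

Lemma Ef_zero x : 0 < x < 1 -> Ef x = 0.
Proof.
  intros Hx. apply zero_of_small. intros eps He.
  destruct (Ef_small eps He) as [y [Hy Hey]].
  rewrite (deriv_zero_const Ef (fun _ => 0) 0 1) with (y := y); auto.
  intros; apply Ef_derive; auto.
Qed.

Definition Rf (y : R) := y * ln (2 * PI * y) - y + Cl2 (2 * PI * y) / (2 * PI).
Definition Df (y : R) := Tf y - Rf y.

Lemma Cl2_lin_derive y : 0 < y < 1 ->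
  is_derive (fun t => Cl2 (2 * PI * t)) y (2 * PI * (- ln (2 * sin (PI * y)))).
Proof.
  intros Hy. pose proof PI_RGT_0.
  pose proof (Cl2_derive (2 * PI * y) ltac:(split; nra)) as H1.
  replace (2 * PI * y / 2) with (PI * y) in H1 by field.
  assert (H2 : is_derive (fun t => 2 * PI * t) y (2 * PI)) by (auto_derive; auto; ring).
  pose proof (is_derive_comp Cl2 (fun t => 2 * PI * t) y _ _ H1 H2) as H3. exact H3.
Qed.

Lemma Df_derive y : 0 < y < 1 -> is_derive Df y 0.
Proof.
  intros Hy. pose proof PI_RGT_0.
  pose proof (Tf_derive y ltac:(lra)) as D1.
  pose proof (Cl2_lin_derive y Hy) as D3.
  assert (D2 : is_derive (fun t => t * ln (2 * PI * t) - t) y (ln (2 * PI * y))).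
  { auto_derive. nra. field. nra. }
  pose proof (is_derive_plus _ _ _ _ _ D2 (is_derive_scal_l _ _ _ (/ (2 * PI)) D3)) as D4.
  pose proof (is_derive_minus _ _ _ _ _ D1 D4) as D.
  replace 0 with (minus (T1 y) (plus (ln (2 * PI * y)) (scal (2 * PI * - ln (2 * sin (PI * y))) (/ (2 * PI))))).
  - eapply is_derive_ext; [|exact D]. intros t. unfold Df, Rf, minus, plus, opp, scal; simpl.
    unfold mult; simpl. field. lra.
  - pose proof (Ef_zero y Hy) as E. unfold Ef in E. unfold minus, plus, opp, scal; simpl. unfold mult; simpl.
    replace (2 * PI * - ln (2 * sin (PI * y)) * / (2 * PI)) with (- ln (2 * sin (PI * y))) by (field; lra).
    lra.
Qed.

Lemma Cl2_lin_cont0 : continuity_pt (fun t => Cl2 (2 * PI * t)) 0.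
Proof.
  apply (continuity_pt_comp (fun t => 2 * PI * t) Cl2).
  eapply is_derive_cont. auto_derive; auto. apply Cl2_cont.
Qed.

Lemma Df_small eps : 0 < eps -> exists y, 0 < y < 1 /\ Rabs (Df y) < eps.
Proof.
  intros He. pose proof PI_RGT_0. pose proof PI2_3_2.
  destruct (small0 Tf (is_derive_cont _ _ _ (Tf_derive 0 ltac:(lra))) Tf_0 (eps / 4) ltac:(lra)) as [d1 [Hd1 HT]].
  destruct (small0 (fun t => Cl2 (2 * PI * t)) Cl2_lin_cont0 ltac:(cbv beta; rewrite Rmult_0_r; apply Cl2_0) (eps / 4) ltac:(lra)) as [d2 [Hd2 HC]].
  set (s := Rmin (/ 2) (Rmin (eps / 8) (Rmin (d1 / 2) (d2 / 2)))).
  assert (Hs0 : 0 < s) by (unfold s; repeat apply Rmin_pos; lra).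
  assert (Hs1 : s <= / 2) by apply Rmin_l.
  assert (Hs2 : s <= eps / 8) by (eapply Rle_trans; [apply Rmin_r| apply Rmin_l]).
  assert (Hs3 : s <= d1 / 2) by (eapply Rle_trans; [apply Rmin_r|]; eapply Rle_trans; [apply Rmin_r| apply Rmin_l]).
  assert (Hs4 : s <= d2 / 2) by (eapply Rle_trans; [apply Rmin_r|]; eapply Rle_trans; [apply Rmin_r| apply Rmin_r]).
  set (y := s * s / (2 * PI)).
  assert (Hy0 : 0 < y) by (unfold y; apply Rdiv_lt_0_compat; nra).
  assert (Hy1 : y <= s / 2).
  { unfold y. apply Rmult_le_reg_r with (2 * PI). nra. unfold Rdiv. rewrite Rmult_assoc, Rinv_l by lra. nra. }
  exists y. split. lra.
  assert (A1 : Rabs (Tf y) < eps / 4) by (apply HT; lra).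
  assert (A2 : Rabs (Cl2 (2 * PI * y)) < eps / 4) by (apply HC; lra).
  assert (A3 : Rabs (y * ln (2 * PI * y)) <= s).
  { replace (2 * PI * y) with (s * s) by (unfold y; field; lra).
    rewrite ln_mult by lra.
    assert (Ls : ln s <= 0) by (pose proof (ln_le_sub1 s Hs0); lra).
    assert (Ls2 : - ln s <= / s).
    { rewrite <- ln_Rinv by lra. eapply Rle_trans. apply ln_le_sub1. apply Rinv_0_lt_compat; lra. lra. }
    rewrite Rabs_mult, Rabs_pos_eq by lra. rewrite Rabs_left1 by lra.
    unfold y. apply Rle_trans with (s * s / (2 * PI) * (2 * / s)).
    apply Rmult_le_compat_l. apply Rlt_le; apply Rdiv_lt_0_compat; nra. lra.
    replace (s * s / (2 * PI) * (2 * / s)) with (s / PI) by (field; split; lra).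
    apply Rmult_le_reg_r with PI. lra. unfold Rdiv. rewrite Rmult_assoc, Rinv_l by lra. nra. }
  assert (A4 : Rabs (Cl2 (2 * PI * y) / (2 * PI)) <= Rabs (Cl2 (2 * PI * y))).
  { unfold Rdiv. rewrite Rabs_mult. rewrite Rabs_pos_eq with (x := / (2 * PI)) by (apply Rlt_le, Rinv_0_lt_compat; lra).
    rewrite <- (Rmult_1_r (Rabs (Cl2 _))) at 2. apply Rmult_le_compat_l. apply Rabs_pos.
    rewrite <- Rinv_1. apply Rinv_le_contravar; lra. }
  unfold Df, Rf.
  replace (Tf y - (y * ln (2 * PI * y) - y + Cl2 (2 * PI * y) / (2 * PI))) with
    (Tf y - y * ln (2 * PI * y) + y - Cl2 (2 * PI * y) / (2 * PI)) by ring.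
  eapply Rle_lt_trans. unfold Rminus. apply Rabs_triang. rewrite Rabs_Ropp.
  eapply Rle_lt_trans. apply Rplus_le_compat_r. eapply Rle_trans. apply Rabs_triang.
  apply Rplus_le_compat_r. apply Rabs_triang. rewrite Rabs_Ropp.
  rewrite (Rabs_pos_eq y) by lra. lra.
Qed.

Lemma Df_zero x : 0 < x < 1 -> Df x = 0.
Proof.
  intros Hx. apply zero_of_small. intros eps He.
  destruct (Df_small eps He) as [y [Hy Hey]].
  rewrite (deriv_zero_const Df (fun _ => 0) 0 1) with (y := y); auto.
  intros; apply Df_derive; auto.
Qed.

Lemma series_cont_left (u : nat -> R -> R) (M : nat -> R) a b :
  a < b -> (forall k y, a <= y <= b -> Rabs (u k y) <= M k) -> ex_series M ->
  (forall k, continuity_pt (u k) b) ->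
  forall eps, 0 < eps -> exists d, 0 < d /\ forall y, a <= y <= b -> b - d < y ->
    Rabs (Series (fun k => u k y) - Series (fun k => u k b)) < eps.
Proof.
  intros Hab Hb HM Hc eps He.
  pose proof (mtest_cvu u M (fun y => a <= y <= b) Hb HM) as CV.
  assert (He3 : 0 < eps / 3) by lra.
  destruct (CV (mkposreal _ He3)) as [N HN]. simpl in HN.
  assert (HcN : continuity_pt (fun y => sum_n (fun k => u k y) N) b).
  { clear -Hc. induction N.
    - apply (continuity_pt_ext (u O)). intros; rewrite sum_O; reflexivity. apply Hc.
    - apply (continuity_pt_ext ((fun y => sum_n (fun k => u k y) N) + u (S N))%F).
      intros; rewrite sum_Sn_R; reflexivity. apply continuity_pt_plus; auto. }
  destruct (proj1 (continuity_pt_locally _ b) HcN (mkposreal _ He3)) as [d Hd].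
  exists d. split. apply cond_pos. intros y Hy Hyd.
  assert (Hb' : a <= b <= b) by lra.
  pose proof (HN N (le_n N) y Hy) as E1. pose proof (HN N (le_n N) b Hb') as E2.
  assert (E3 : Rabs (sum_n (fun k => u k y) N - sum_n (fun k => u k b) N) < eps / 3).
  { apply (Hd y). unfold ball; simpl. unfold AbsRing_ball, abs, minus, plus, opp; simpl.
    apply Rabs_lt_between'. lra. }
  change (Series (fun k => u k y)) with (real (Lim_seq (fun n => sum_n (fun k => u k y) n))).
  change (Series (fun k => u k b)) with (real (Lim_seq (fun n => sum_n (fun k => u k b) n))).
  set (A := sum_n (fun k => u k y) N) in *. set (B := sum_n (fun k => u k b) N) in *.
  set (LA := real (Lim_seq (fun n => sum_n (fun k => u k y) n))) in *.
  set (LB := real (Lim_seq (fun n => sum_n (fun k => u k b) n))) in *.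
  apply Rabs_lt_between in E1. apply Rabs_lt_between in E2. apply Rabs_lt_between in E3.
  apply Rabs_lt_between. lra.
Qed.

Lemma uT_bound1 k y : Rabs y <= 1 -> Rabs (uT k y) <= Z2 * / INR (S k) ^ 2.
Proof.
  intros Hy. unfold uT. pose proof (lt_0_INR (S k) (Nat.lt_0_succ k)).
  assert (1 <= INR (S k)) by (apply (le_INR 1); lia). pose proof (zt_bound k).
  unfold Rdiv. rewrite !Rabs_mult, Rabs_inv, (Rabs_pos_eq (zt k)) by lra.
  rewrite (Rabs_pos_eq (INR (S k) * (2 * INR (S k) + 1))) by nra.
  apply Rmult_le_compat. apply Rmult_le_pos; [lra|apply Rabs_pos].
  apply Rlt_le, Rinv_0_lt_compat; nra.
  rewrite <- (Rmult_1_r Z2). apply Rmult_le_compat; try lra. apply Rabs_pos.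
  rewrite <- RPow_abs. rewrite <- (pow1 (2 * k + 3)). apply pow_incr. split; [apply Rabs_pos|lra].
  apply Rinv_le_contravar. apply pow_lt; lra.
  replace (INR (S k) ^ 2) with (INR (S k) * INR (S k)) by ring. nra.
Qed.

Lemma Rf_cont1 : continuity_pt Rf 1.
Proof.
  pose proof PI_RGT_0.
  assert (C1 : continuity_pt (fun y => y * ln (2 * PI * y) - y) 1).
  { eapply is_derive_cont. auto_derive. nra. reflexivity. }
  assert (C2 : continuity_pt (fun y => Cl2 (2 * PI * y)) 1).
  { apply (continuity_pt_comp (fun t => 2 * PI * t) Cl2).
    eapply is_derive_cont. auto_derive; auto. apply Cl2_cont. }
  set (g1 := fun y => y * ln (2 * PI * y) - y) in *.
  set (g2 := fun y => Cl2 (2 * PI * y)) in *.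
  apply (continuity_pt_ext_loc (g1 + g2 * fct_cte (/ (2 * PI)))%F).
  apply filter_forall. intros t. unfold Rf, fct_cte, plus_fct, mult_fct, g1, g2. unfold Rdiv. ring.
  apply continuity_pt_plus. exact C1. apply continuity_pt_mult. exact C2. apply continuity_pt_const.
  intros a b; reflexivity.
Qed.

Lemma Tf_Rf x : 0 < x <= 1 -> Tf x = Rf x.
Proof.
  intros Hx. destruct (Req_dec x 1) as [E|E].
  2:{ pose proof (Df_zero x ltac:(lra)). unfold Df in H. lra. }
  subst x. apply Rminus_diag_uniq. apply zero_of_small. intros eps He.
  destruct (series_cont_left uT (fun k => Z2 * / INR (S k) ^ 2) 0 1 ltac:(lra)) with (eps := eps / 2)
    as [d1 [Hd1 H1]].
  - intros k y Hy. apply uT_bound1. apply Rabs_le. lra.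
  - apply (@ex_series_scal_l R_AbsRing R_NormedModule Z2 (fun k => / INR (S k) ^ 2)). apply ex_series_inv_sq.
  - intros k. eapply is_derive_cont. apply uT_derive.
  - lra.
  - destruct (proj1 (continuity_pt_locally _ 1) Rf_cont1 (mkposreal (eps / 2) ltac:(lra))) as [d2 Hd2].
    set (y := Rmax (/ 2) (Rmax (1 - d1 / 2) (1 - d2 / 2))).
    assert (Hy1 : / 2 <= y) by apply Rmax_l.
    assert (Hy2 : 1 - d1 / 2 <= y) by (eapply Rle_trans; [apply Rmax_l|apply Rmax_r]).
    assert (Hy3 : 1 - d2 / 2 <= y) by (eapply Rle_trans; [apply Rmax_r|apply Rmax_r]).
    pose proof (cond_pos d2).
    assert (Hy4 : y < 1).
    { unfold y. apply Rmax_lub_lt. lra. apply Rmax_lub_lt; lra. }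
    specialize (H1 y ltac:(lra) ltac:(lra)). fold (Tf y) (Tf 1) in H1.
    assert (H2 : Rabs (Rf y - Rf 1) < eps / 2).
    { apply (Hd2 y). unfold ball; simpl. unfold AbsRing_ball, abs, minus, plus, opp; simpl.
      apply Rabs_lt_between'. simpl. lra. }
    assert (E3 : Tf y = Rf y) by (pose proof (Df_zero y ltac:(lra)); unfold Df in *; lra).
    rewrite E3 in H1. apply Rabs_lt_between in H1. apply Rabs_lt_between in H2.
    apply Rabs_lt_between. lra.
Qed.

Definition sT (k : nat) (x : R) := zt k * x ^ (2 * k + 2) / (INR (S k) * (2 * INR (S k) + 1)).

Lemma core_pos y : 0 < y <= 1 ->
  is_series (fun k => sT k y) (ln (2 * PI * y) - 1 + Cl2 (2 * PI * y) / (2 * PI * y)).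
Proof.
  intros Hy. pose proof PI_RGT_0.
  assert (Hex : ex_series (fun k => uT k y)).
  { apply (@ex_series_le R_AbsRing R_CompleteNormedModule _ (fun k => Z2 * / INR (S k) ^ 2)).
    intros k. apply uT_bound1. apply Rabs_le; lra.
    apply (@ex_series_scal_l R_AbsRing R_NormedModule Z2 (fun k => / INR (S k) ^ 2)). apply ex_series_inv_sq. }
  pose proof (Series_correct _ Hex) as HS. fold (Tf y) in HS.
  pose proof (@is_series_scal_l R_AbsRing R_NormedModule (/ y) _ _ HS) as HS2.
  replace (ln (2 * PI * y) - 1 + Cl2 (2 * PI * y) / (2 * PI * y)) with (/ y * Tf y).
  2:{ rewrite Tf_Rf by lra. unfold Rf. field. lra. }
  apply is_series_ext_R with (fun k => / y * uT k y). 2: exact HS2.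
  intros k. unfold uT, sT. replace (2 * k + 3)%nat with (S (2 * k + 2)) by lia. simpl pow.
  pose proof (lt_0_INR (S k) (Nat.lt_0_succ k)). field. split; lra.
Qed.

Lemma Cl2_odd t : Cl2 (- t) = - Cl2 t.
Proof.
  unfold Cl2. rewrite <- Series_opp. apply Series_ext. intros n.
  replace (INR (S n) * - t) with (- (INR (S n) * t)) by ring. rewrite sin_neg. unfold Rdiv. ring.
Qed.

Theorem core x : 0 < Rabs x <= 1 ->
  is_series (fun k => sT k x) (ln (2 * PI * Rabs x) - 1 + Cl2 (2 * PI * x) / (2 * PI * x)).
Proof.
  intros Hx. pose proof PI_RGT_0. destruct (Rle_dec 0 x).
  - rewrite Rabs_pos_eq in * by lra. apply core_pos. lra.
  - rewrite Rabs_left in * by lra.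
    replace (Cl2 (2 * PI * x) / (2 * PI * x)) with (Cl2 (2 * PI * - x) / (2 * PI * - x)).
    2:{ replace (2 * PI * - x) with (- (2 * PI * x)) by ring. rewrite Cl2_odd. field. split; lra. }
    apply is_series_ext_R with (fun k => sT k (- x)). 2: apply core_pos; lra.
    intros k. unfold sT. replace (2 * k + 2)%nat with (2 * (k + 1))%nat by lia.
    rewrite !pow_mult. replace ((- x) ^ 2) with (x ^ 2) by ring. reflexivity.
Qed.

Lemma sqrt5_facts : 0 < sqrt 5 /\ sqrt 5 * sqrt 5 = 5 /\ 1 < sqrt 5.
Proof.
  assert (H1 : sqrt 5 * sqrt 5 = 5) by (apply sqrt_sqrt; lra).
  assert (H2 : 0 <= sqrt 5) by apply sqrt_pos.
  split; [nra|split; [exact H1|nra]].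
Qed.

Lemma alpha_sq : alpha ^ 2 = alpha + 1.
Proof. destruct sqrt5_facts as [_ [H _]]. unfold alpha. simpl. nra. Qed.
Lemma beta_sq : beta ^ 2 = beta + 1.
Proof. destruct sqrt5_facts as [_ [H _]]. unfold beta. simpl. nra. Qed.
Lemma alpha_beta : alpha * beta = -1.
Proof. destruct sqrt5_facts as [_ [H _]]. unfold alpha, beta. nra. Qed.
Lemma alpha_pos : 1 < alpha.
Proof. destruct sqrt5_facts as [_ [_ H]]. unfold alpha. lra. Qed.
Lemma beta_neg : beta < 0.
Proof. destruct sqrt5_facts as [_ [_ H]]. unfold beta. lra. Qed.
Lemma alpha_m_beta : alpha - beta = sqrt 5.
Proof. unfold alpha, beta. field. Qed.

Lemma binet n : fib n = (alpha ^ n - beta ^ n) / sqrt 5 /\ lucas n = alpha ^ n + beta ^ n.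
Proof.
  destruct sqrt5_facts as [H0 [H1 _]].
  assert (K : forall n, (fib n = (alpha ^ n - beta ^ n) / sqrt 5 /\ lucas n = alpha ^ n + beta ^ n) /\
                        (fib (S n) = (alpha ^ S n - beta ^ S n) / sqrt 5 /\ lucas (S n) = alpha ^ S n + beta ^ S n)).
  { induction n0.
    - simpl. rewrite <- alpha_m_beta. unfold alpha, beta. split; split; field; lra.
    - destruct IHn0 as [[A1 A2] [B1 B2]]. split; [split; auto|].
      change (fib (S (S n0))) with (fib (S n0) + fib n0).
      change (lucas (S (S n0))) with (lucas (S n0) + lucas n0).
      rewrite A1, A2, B1, B2.
      replace (alpha ^ S (S n0)) with (alpha ^ n0 * alpha ^ 2) by (simpl; ring).
      replace (beta ^ S (S n0)) with (beta ^ n0 * beta ^ 2) by (simpl; ring).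
      rewrite alpha_sq, beta_sq. simpl. split; field; lra. }
  apply K.
Qed.

Lemma scal_R (a b : R) : scal a b = a * b.
Proof. reflexivity. Qed.
Lemma plus_R (a b : R) : plus a b = a + b.
Proof. reflexivity. Qed.
Lemma opp_R (a : R) : opp a = - a.
Proof. reflexivity. Qed.

Lemma ln_alpha_beta : ln (- beta) = - ln alpha.
Proof.
  pose proof alpha_pos. pose proof alpha_beta.
  replace (- beta) with (/ alpha). apply ln_Rinv. lra.
  apply (Rmult_eq_reg_l alpha). rewrite Rinv_r by lra. nra. lra.
Qed.

Theorem theorem17 (z : R) (hz0 : 0 < Rabs z) (hz1 : Rabs z <= 1 / alpha) :
  is_series
    (fun n : nat =>
       let k := S n in
       fib (2 * k) * zeta (INR (2 * k)) * z ^ (2 * k) / (INR k * (2 * INR k + 1)))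
    (2 * ln alpha / sqrt 5
     - (beta * Cl2 (2 * PI * alpha * z) - alpha * Cl2 (2 * PI * beta * z))
       / (2 * sqrt 5 * PI * z))
  /\
  is_series
    (fun n : nat =>
       let k := S n in
       lucas (2 * k) * zeta (INR (2 * k)) * z ^ (2 * k) / (INR k * (2 * INR k + 1)))
    (-2 + 2 * ln (2 * PI * Rabs z)
     - (beta * Cl2 (2 * PI * alpha * z) + alpha * Cl2 (2 * PI * beta * z))
       / (2 * PI * z)).
Proof.
  pose proof alpha_pos as Ha. pose proof beta_neg as Hb. pose proof alpha_beta as Hab.
  destruct sqrt5_facts as [S0 [S1 _]]. pose proof PI_RGT_0 as HPI.
  assert (Hz : z <> 0) by (intro E; rewrite E, Rabs_R0 in hz0; lra).
  assert (HzA : Rabs z * alpha <= 1).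
  { apply Rmult_le_reg_r with (/ alpha). apply Rinv_0_lt_compat; lra.
    rewrite Rmult_assoc, Rinv_r, Rmult_1_r, Rmult_1_l by lra. unfold Rdiv in hz1. lra. }
  assert (HA : 0 < Rabs (alpha * z) <= 1).
  { rewrite Rabs_mult, (Rabs_pos_eq alpha) by lra. split. nra. lra. }
  assert (HB : 0 < Rabs (beta * z) <= 1).
  { rewrite Rabs_mult, (Rabs_left beta) by lra. split. nra.
    assert (- beta < 1) by nra. nra. }
  pose proof (core _ HA) as CA. pose proof (core _ HB) as CB.
  assert (Eterm : forall n (w : nat -> R),
    (forall m, w m = alpha ^ m - beta ^ m \/ True) ->
    forall c, c * zeta (INR (2 * S n)) * z ^ (2 * S n) / (INR (S n) * (2 * INR (S n) + 1)) =
     c * (z ^ (2 * n + 2) * zt n / (INR (S n) * (2 * INR (S n) + 1)))).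
  { intros n w _ c. unfold zt. replace (2 * S n)%nat with (2 * n + 2)%nat by lia. unfold Rdiv. ring. }
  assert (EsT : forall n x, sT n (x * z) = x ^ (2 * n + 2) * (z ^ (2 * n + 2) * zt n / (INR (S n) * (2 * INR (S n) + 1)))).
  { intros n x. unfold sT. rewrite Rpow_mult_distr. unfold Rdiv. ring. }
  rewrite Rabs_mult, (Rabs_pos_eq alpha) in CA by lra.
  rewrite Rabs_mult, (Rabs_left beta) in CB by lra.
  assert (Hln1 : ln (2 * PI * (alpha * Rabs z)) = ln alpha + ln (2 * PI * Rabs z)).
  { replace (2 * PI * (alpha * Rabs z)) with (alpha * (2 * PI * Rabs z)) by ring. apply ln_mult; nra. }
  assert (Hln2 : ln (2 * PI * (- beta * Rabs z)) = - ln alpha + ln (2 * PI * Rabs z)).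
  { replace (2 * PI * (- beta * Rabs z)) with (- beta * (2 * PI * Rabs z)) by ring.
    rewrite ln_mult by nra. rewrite ln_alpha_beta. ring. }
  rewrite Hln1 in CA. rewrite Hln2 in CB.
  replace (2 * PI * (alpha * z)) with (2 * PI * alpha * z) in CA by ring.
  replace (2 * PI * (beta * z)) with (2 * PI * beta * z) in CB by ring.
  set (CLa := Cl2 (2 * PI * alpha * z)) in *. set (CLb := Cl2 (2 * PI * beta * z)) in *.
  set (L := ln (2 * PI * Rabs z)) in *.
  split.
  - pose proof (is_series_minus _ _ _ _ CA CB) as CD.
    pose proof (@is_series_scal_l R_AbsRing R_NormedModule (/ sqrt 5) _ _ CD) as CE.
    eapply is_series_ext_R; [| replace (2 * ln alpha / sqrt 5 - (beta * CLa - alpha * CLb) / (2 * sqrt 5 * PI * z))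
       with (scal (/ sqrt 5) (plus (ln alpha + L - 1 + CLa / (2 * PI * alpha * z)) (opp (- ln alpha + L - 1 + CLb / (2 * PI * beta * z))))); [exact CE|] ].
    + intros n. cbv zeta. rewrite (proj1 (binet _)).
      rewrite scal_R, plus_R, opp_R.
      rewrite !EsT. unfold zt. replace (2 * S n)%nat with (2 * n + 2)%nat by lia.
      pose proof (lt_0_INR (S n) (Nat.lt_0_succ n)).
      field. repeat split; nra.
    + assert (Kb : beta = - / alpha).
      { apply (Rmult_eq_reg_l alpha). rewrite Ropp_mult_distr_r_reverse, Rinv_r by lra. lra. lra. }
      rewrite scal_R, plus_R, opp_R.
      rewrite Kb. match goal with |- ?a = ?b => assert (X : @eq R a b) end.
      { field. repeat split; lra. }
      exact X.
  - pose proof (is_series_plus _ _ _ _ CA CB) as CD.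
    eapply is_series_ext_R; [| replace (-2 + 2 * L - (beta * CLa + alpha * CLb) / (2 * PI * z))
       with (plus (ln alpha + L - 1 + CLa / (2 * PI * alpha * z)) (- ln alpha + L - 1 + CLb / (2 * PI * beta * z))); [exact CD|] ].
    + intros n. cbv zeta. rewrite (proj2 (binet _)).
      rewrite plus_R.
      rewrite !EsT. unfold zt. replace (2 * S n)%nat with (2 * n + 2)%nat by lia.
      pose proof (lt_0_INR (S n) (Nat.lt_0_succ n)).
      field. repeat split; nra.
    + assert (Kb : beta = - / alpha).
      { apply (Rmult_eq_reg_l alpha). rewrite Ropp_mult_distr_r_reverse, Rinv_r by lra. lra. lra. }
      rewrite plus_R.
      rewrite Kb. match goal with |- ?a = ?b => assert (X : @eq R a b) end.
      { field. repeat split; lra. }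
      exact X.
Qed.
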